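(* $$\int_{0}^{1}\frac{\log(x)\,\log(\log x)\,\tanh^{-1}(x)}{x}\,dx=\frac18\Big(-7\zeta'(3)+\zeta(3)\big(-7+7\gamma-7i\pi-\log 2\big)\Big),$$ where $\gamma$ is Euler's constant and $\zeta$ the Riemann zeta function.
   Context: For $x\in(0,1)$, $\log(\log x)=\log|\log x|+i\pi$ (principal branch). *)

(* Defs.v *)
From Stdlib Require Import Reals.
From Coquelicot Require Import Coquelicot.
Open Scope R_scope.

Definition artanh (x : R) : R := / 2 * ln ((1 + x) / (1 - x)).

(* Principal complex logarithm of a nonzero real number t:
   Log t = ln |t| + i*Arg t, with Arg t = 0 for t > 0 and Arg t = pi for t < 0. *)
Definition clog_real (t : R) : C :=
  if Rlt_dec 0 t then (ln t, 0) else (ln (- t), PI).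

Definition zeta (s : R) : R := Series (fun n : nat => / Rpower (INR (S n)) s).

Definition zeta' (s : R) : R := Derive zeta s.

Definition euler_gamma : R :=
  real (Lim_seq (fun n : nat => sum_f_R0 (fun k => / INR (S k)) n - ln (INR (S n)))).

Definition integrand (x : R) : C :=
  Cmult (RtoC (ln x * artanh x / x)) (clog_real (ln x)).

(* Main.v *)
Require Import Defs.
From Stdlib Require Import Reals Lra Lia Psatz ZArith.
From Coquelicot Require Import Coquelicot.
Open Scope R_scope.

Lemma exp_lb3 t : 0 <= t -> (1 + t/3)^3 <= exp t.
Proof.
  intros Ht. replace (exp t) with (exp (t/3) ^ 3).
  - apply pow_incr. split. lra. apply exp_ineq1_le.
  - simpl. rewrite Rmult_1_r, <- !exp_plus. f_equal. field.
Qed.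

Lemma exp_lb4 t : 0 <= t -> (1 + t/4)^4 <= exp t.
Proof.
  intros Ht. replace (exp t) with (exp (t/4) ^ 4).
  - apply pow_incr. split. lra. apply exp_ineq1_le.
  - simpl. rewrite Rmult_1_r, <- !exp_plus. f_equal. field.
Qed.

Lemma exp_decay3 t : 0 <= t -> exp (-t) <= 27 / (1+t)^3.
Proof.
  intros Ht. rewrite exp_Ropp.
  assert (H := exp_lb3 t Ht). assert (Hp : 0 < (1 + t/3)^3) by (apply pow_lt; lra).
  assert (H1 : (1+t)^3 <= 27 * (1 + t/3)^3).
  { replace (27 * (1 + t/3)^3) with ((3+t)^3) by (simpl; field). apply pow_incr; lra. }
  apply Rle_trans with (27 / (27 * (1+t/3)^3)).
  - replace (27 / (27 * (1+t/3)^3)) with (/ (1+t/3)^3) by (field; lra).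
    apply Rinv_le_contravar; lra.
  - unfold Rdiv. apply Rmult_le_compat_l. lra. apply Rinv_le_contravar.
    apply pow_lt; lra. lra.
Qed.

Lemma exp_decay4 t : 0 <= t -> exp (-t) <= 256 / (1+t)^4.
Proof.
  intros Ht. rewrite exp_Ropp.
  assert (H := exp_lb4 t Ht). assert (Hp : 0 < (1 + t/4)^4) by (apply pow_lt; lra).
  assert (H1 : (1+t)^4 <= 256 * (1 + t/4)^4).
  { replace (256 * (1 + t/4)^4) with ((4+t)^4) by (simpl; field). apply pow_incr; lra. }
  apply Rle_trans with (256 / (256 * (1+t/4)^4)).
  - replace (256 / (256 * (1+t/4)^4)) with (/ (1+t/4)^4) by (field; lra).
    apply Rinv_le_contravar; lra.
  - unfold Rdiv. apply Rmult_le_compat_l. lra. apply Rinv_le_contravar.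
    apply pow_lt; lra. lra.
Qed.

Lemma ln_lt_self y : 0 < y -> ln y < y.
Proof.
  intros Hy. rewrite <- (ln_exp y) at 2. apply ln_increasing. lra.
  assert (H := exp_ineq1_le y). lra.
Qed.

Lemma sqrt_pos_lt t : 0 < t -> 0 < sqrt t.
Proof. intros; apply sqrt_lt_R0; lra. Qed.

Lemma abs_ln_bound t : 0 < t -> Rabs (ln t) <= 2 * (1 + t) / sqrt t.
Proof.
  intros Ht. assert (Hs := sqrt_pos_lt t Ht).
  assert (Hss : sqrt t * sqrt t = t) by (apply sqrt_sqrt; lra).
  assert (Hl : ln t = 2 * ln (sqrt t)).
  { rewrite <- Hss at 1. rewrite ln_mult by lra. ring. }
  assert (H1 := ln_lt_self (sqrt t) Hs).
  assert (H2 := ln_lt_self (/ sqrt t) (Rinv_0_lt_compat _ Hs)).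
  rewrite ln_Rinv in H2 by lra.
  assert (E : 2 * (1 + t) / sqrt t = 2 * sqrt t + 2 / sqrt t).
  { set (s := sqrt t) in *. rewrite <- Hss. field. lra. }
  rewrite E. unfold Rdiv. apply Rabs_le. split; nra.
Qed.

Lemma t_ln_bound t : 0 < t <= 1 -> Rabs (t * ln t) <= 2 * sqrt t.
Proof.
  intros Ht. assert (Hs := sqrt_pos_lt t (proj1 Ht)).
  assert (Hss : sqrt t * sqrt t = t) by (apply sqrt_sqrt; lra).
  assert (H2 := ln_lt_self (/ sqrt t) (Rinv_0_lt_compat _ Hs)).
  rewrite ln_Rinv in H2 by lra.
  assert (Hl : ln t = 2 * ln (sqrt t)).
  { rewrite <- Hss at 1. rewrite ln_mult by lra. ring. }
  assert (ln t <= 0). { rewrite <- ln_1. apply ln_le; lra. }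
  rewrite Rabs_mult, Rabs_right, Rabs_left1 by lra.
  assert (t * / sqrt t = sqrt t). { set (s := sqrt t) in *. rewrite <- Hss. field. lra. }
  nra.
Qed.

Lemma exp_le_mono x y : x <= y -> exp x <= exp y.
Proof. intros H. destruct (Req_dec x y). subst; lra. apply Rlt_le, exp_increasing; lra. Qed.

Ltac reqR := match goal with |- ?a = ?b => change (@eq R a b) end.

Lemma minusR (a b : R) : minus a b = a - b.
Proof. reflexivity. Qed.

Lemma is_RInt_derive_R (f df : R -> R) a b :
  (forall x, Rmin a b <= x <= Rmax a b -> is_derive f x (df x)) ->
  (forall x, Rmin a b <= x <= Rmax a b -> continuous df x) ->
  RInt df a b = f b - f a.
Proof.
  intros H1 H2. apply is_RInt_unique. rewrite <- minusR. apply (is_RInt_derive f df); auto.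
Qed.

Lemma ex_RInt_cont (f : R -> R) a b :
  (forall x, Rmin a b <= x <= Rmax a b -> continuous f x) -> ex_RInt f a b.
Proof. intros; apply (ex_RInt_continuous (V:=R_CompleteNormedModule)); auto. Qed.

Lemma RInt_bound_sqrt (g : R -> R) (C a b : R) : 0 <= C -> 0 < a <= b ->
  (forall t, a <= t <= b -> continuous g t) ->
  (forall t, a <= t <= b -> Rabs (g t) <= C / (sqrt t * (1+t))) ->
  Rabs (RInt g a b) <= 2 * C * (atan (sqrt b) - atan (sqrt a)).
Proof.
  intros HC Hab Hc Hb.
  assert (Hex : ex_RInt g a b) by (apply ex_RInt_cont; rewrite Rmin_left, Rmax_right by lra; auto).
  eapply Rle_trans. apply abs_RInt_le; [lra | exact Hex].
  assert (E : RInt (fun t => C / (sqrt t * (1+t))) a b = 2 * C * atan (sqrt b) - 2 * C * atan (sqrt a)).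
  { apply (is_RInt_derive_R (fun t => 2 * C * atan (sqrt t))); rewrite Rmin_left, Rmax_right by lra.
    - intros x Hx. auto_derive. lra.
      assert (Hs := sqrt_pos_lt x ltac:(lra)). rewrite Rmult_1_r, sqrt_sqrt by lra. field.
      split; lra.
    - intros x Hx. apply (ex_derive_continuous (fun t => C / (sqrt t * (1+t)))). auto_derive.
      assert (Hs := sqrt_pos_lt x ltac:(lra)). repeat split; try lra. nra. }
  assert (E2 : 2 * C * (atan (sqrt b) - atan (sqrt a)) = 2 * C * atan (sqrt b) - 2 * C * atan (sqrt a)) by ring.
  rewrite E2, <- E. apply RInt_le. lra.
  - apply ex_RInt_cont. rewrite Rmin_left, Rmax_right by lra. intros; apply continuous_Rabs_comp; auto.
  - apply ex_RInt_cont. rewrite Rmin_left, Rmax_right by lra. intros x Hx.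
    apply (ex_derive_continuous (fun t => C / (sqrt t * (1+t)))). auto_derive.
    assert (Hs := sqrt_pos_lt x ltac:(lra)). repeat split; try lra. nra.
  - intros; apply Hb; lra.
Qed.

Lemma atan_diff_le a b : 0 < a <= b -> 0 <= atan (sqrt b) - atan (sqrt a) <= PI / 2.
Proof.
  intros H. assert (0 <= sqrt a) by apply sqrt_pos.
  assert (atan 0 <= atan (sqrt a)). { destruct (Req_dec (sqrt a) 0) as [E|E]. rewrite E; lra. apply Rlt_le, atan_increasing; lra. }
  rewrite atan_0 in *.
  assert (sqrt a <= sqrt b) by (apply sqrt_le_1_alt; lra).
  assert (atan (sqrt a) <= atan (sqrt b)). { destruct (Req_dec (sqrt a) (sqrt b)) as [E|E]. rewrite E; lra. apply Rlt_le, atan_increasing; lra. }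
  destruct (atan_bound (sqrt b)). lra.
Qed.

Lemma RInt_bound_sqrt_pi (g : R -> R) (C a b : R) : 0 <= C -> 0 < a <= b ->
  (forall t, a <= t <= b -> continuous g t) ->
  (forall t, a <= t <= b -> Rabs (g t) <= C / (sqrt t * (1+t))) ->
  Rabs (RInt g a b) <= C * PI.
Proof.
  intros. eapply Rle_trans. apply RInt_bound_sqrt; eauto.
  destruct (atan_diff_le a b); auto. nra.
Qed.

Definition Cont0 (f : R -> R) := forall t, 0 < t -> continuous f t.

Definition IL (f : R -> R) (l : R) :=
  forall eps, 0 < eps -> exists d, 0 < d /\ exists M, forall a b, 0 < a < d -> M < b ->
    Rabs (RInt f a b - l) < eps.

Lemma ex_RInt_C0 f a b : Cont0 f -> 0 < a -> 0 < b -> ex_RInt f a b.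
Proof.
  intros Hf Ha Hb. apply ex_RInt_cont. intros x Hx. apply Hf.
  assert (0 < Rmin a b) by (apply Rmin_glb_lt; auto). lra.
Qed.

Lemma IL_ext f g l : (forall t, 0 < t -> f t = g t) -> IL f l -> IL g l.
Proof.
  intros E H eps He. destruct (H eps He) as [d [Hd [M HM]]]. exists (Rmin d 1). split.
  apply Rmin_glb_lt; lra. exists (Rmax M 1). intros a b Ha Hb.
  assert (Ha' : 0 < a < d) by (split; [lra| eapply Rlt_le_trans; [apply Ha|apply Rmin_l]]).
  assert (Hb' : M < b) by (eapply Rle_lt_trans; [apply Rmax_l|apply Hb]).
  rewrite <- (RInt_ext f). apply HM; auto.
  intros x Hx. apply E. assert (0 < Rmin a b). apply Rmin_glb_lt; try lra.
  assert (1 < b) by (eapply Rle_lt_trans; [apply Rmax_r|apply Hb]). lra. lra.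
Qed.

Lemma IL_strong f l : IL f l -> forall eps, 0 < eps -> exists d, 0 < d <= 1 /\ exists M, 1 <= M /\
   forall a b, 0 < a < d -> M < b -> Rabs (RInt f a b - l) < eps.
Proof.
  intros H eps He. destruct (H eps He) as [d [Hd [M HM]]]. exists (Rmin d 1). split.
  split. apply Rmin_glb_lt; lra. apply Rmin_r. exists (Rmax M 1). split. apply Rmax_r.
  intros a b Ha Hb. apply HM.
  split; [lra| eapply Rlt_le_trans; [apply Ha|apply Rmin_l]].
  eapply Rle_lt_trans; [apply Rmax_l|apply Hb].
Qed.

Lemma IL_plus f g lf lg : Cont0 f -> Cont0 g -> IL f lf -> IL g lg ->
  IL (fun t => f t + g t) (lf + lg).
Proof.
  intros Cf Cg Hf Hg eps He.
  destruct (IL_strong _ _ Hf (eps/2)) as [d1 [Hd1 [M1 [HM1 H1]]]]. lra.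
  destruct (IL_strong _ _ Hg (eps/2)) as [d2 [Hd2 [M2 [HM2 H2]]]]. lra.
  exists (Rmin d1 d2). split. apply Rmin_glb_lt; lra.
  exists (Rmax M1 M2). intros a b Ha Hb.
  assert (a < d1) by (eapply Rlt_le_trans; [apply Ha|apply Rmin_l]).
  assert (a < d2) by (eapply Rlt_le_trans; [apply Ha|apply Rmin_r]).
  assert (M1 < b) by (eapply Rle_lt_trans; [apply Rmax_l|apply Hb]).
  assert (M2 < b) by (eapply Rle_lt_trans; [apply Rmax_r|apply Hb]).
  rewrite (RInt_plus f g). 2,3: apply ex_RInt_C0; auto; lra.
  assert (Ha1 := H1 a b ltac:(lra) ltac:(lra)).
  assert (Hb1 := H2 a b ltac:(lra) ltac:(lra)).
  change (plus (RInt f a b) (RInt g a b)) with (RInt f a b + RInt g a b).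
  replace (RInt f a b + RInt g a b - (lf + lg)) with ((RInt f a b - lf) + (RInt g a b - lg)) by ring.
  eapply Rle_lt_trans. apply Rabs_triang. lra.
Qed.

Lemma IL_scal f c l : Cont0 f -> IL f l -> IL (fun t => c * f t) (c * l).
Proof.
  intros Cf Hf eps He.
  destruct (IL_strong _ _ Hf (eps/(Rabs c + 1))) as [d [Hd [M [HM H]]]].
  { apply Rdiv_lt_0_compat. lra. assert (Hc := Rabs_pos c). lra. }
  exists d. split. lra. exists M. intros a b Ha Hb.
  assert (E : RInt (fun t => c * f t) a b = c * RInt f a b).
  { apply (RInt_scal f a b c). apply ex_RInt_C0; auto; lra. }
  rewrite E. replace (c * RInt f a b - c * l) with (c * (RInt f a b - l)) by ring.
  rewrite Rabs_mult. assert (Hx := H a b Ha Hb). assert (Hc := Rabs_pos c).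
  assert (Hx2 : Rabs c * Rabs (RInt f a b - l) <= Rabs c * (eps / (Rabs c + 1))).
  { apply Rmult_le_compat_l; lra. }
  eapply Rle_lt_trans. apply Hx2.
  apply Rlt_le_trans with ((Rabs c + 1) * (eps / (Rabs c + 1))).
  apply Rmult_lt_compat_r. apply Rdiv_lt_0_compat; lra. lra.
  right. field. lra.
Qed.

Lemma IL_unique_ext f l1 l2 : IL f l1 -> l1 = l2 -> IL f l2.
Proof. intros H E; subst; auto. Qed.

Definition Lim0 (F : R -> R) (l : R) :=
  forall eps, 0 < eps -> exists d, 0 < d /\ forall a, 0 < a < d -> Rabs (F a - l) < eps.
Definition LimInf (F : R -> R) (l : R) :=
  forall eps, 0 < eps -> exists M, forall b, M < b -> Rabs (F b - l) < eps.

Lemma Lim0_cont F : continuous F 0 -> Lim0 F (F 0).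
Proof.
  intros H eps He. destruct (proj1 (filterlim_locally F (F 0)) H (mkposreal eps He)) as [d Hd].
  exists d. split. apply cond_pos. intros a Ha. apply (Hd a).
  unfold ball; simpl; unfold AbsRing_ball, abs, minus, plus, opp; simpl.
  replace (a + - 0) with a by ring. rewrite Rabs_right; lra.
Qed.

Lemma Lim0_bound F l C : 0 <= C -> (forall a, 0 < a < 1 -> Rabs (F a - l) <= C * sqrt a) -> Lim0 F l.
Proof.
  intros HC H eps He. set (e := eps / (C + 1)).
  assert (He' : 0 < e) by (apply Rdiv_lt_0_compat; lra).
  assert (Ee : e = eps / (C + 1)) by reflexivity. clearbody e.
  exists (Rmin 1 (e * e)). split. apply Rmin_glb_lt; nra.
  intros a Ha. assert (a < 1) by (eapply Rlt_le_trans; [apply Ha|apply Rmin_l]).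
  assert (a < e * e) by (eapply Rlt_le_trans; [apply Ha|apply Rmin_r]).
  eapply Rle_lt_trans. apply H; lra.
  assert (sqrt a < e). { rewrite <- (sqrt_square e) by lra. apply sqrt_lt_1_alt. lra. }
  assert (Hs := sqrt_pos a).
  apply Rle_lt_trans with (C * e). apply Rmult_le_compat_l; lra.
  rewrite Ee. apply Rlt_le_trans with ((C+1) * (eps / (C+1))). apply Rmult_lt_compat_r; lra.
  right. field. lra.
Qed.

Lemma LimInf_bound F l C : 0 <= C -> (forall b, 1 <= b -> Rabs (F b - l) <= C / b) -> LimInf F l.
Proof.
  intros HC H eps He. exists (Rmax 1 (C / eps)). intros b Hb.
  assert (1 < b) by (eapply Rle_lt_trans; [apply Rmax_l|apply Hb]).
  assert (C / eps < b) by (eapply Rle_lt_trans; [apply Rmax_r|apply Hb]).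
  eapply Rle_lt_trans. apply H; lra.
  apply (Rmult_lt_reg_r b). lra. unfold Rdiv. rewrite Rmult_assoc, Rinv_l by lra.
  apply (Rmult_lt_compat_l eps) in H1; [|lra]. unfold Rdiv in H1.
  rewrite <- Rmult_assoc, (Rmult_comm eps C), Rmult_assoc, Rinv_r, Rmult_1_r in H1 by lra. lra.
Qed.

Lemma IL_antider f F LA LB : Cont0 f ->
  (forall t, 0 < t -> is_derive F t (f t)) -> Lim0 F LA -> LimInf F LB -> IL f (LB - LA).
Proof.
  intros Cf HD HA HB eps He.
  destruct (HA (eps/2)) as [d [Hd Hd']]. lra.
  destruct (HB (eps/2)) as [M HM]. lra.
  exists (Rmin d 1). split. apply Rmin_glb_lt; lra. exists (Rmax M 1). intros a b Ha Hb.
  assert (a < d) by (eapply Rlt_le_trans; [apply Ha|apply Rmin_l]).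
  assert (a < 1) by (eapply Rlt_le_trans; [apply Ha|apply Rmin_r]).
  assert (M < b) by (eapply Rle_lt_trans; [apply Rmax_l|apply Hb]).
  assert (1 < b) by (eapply Rle_lt_trans; [apply Rmax_r|apply Hb]).
  rewrite (is_RInt_derive_R F f).
  - replace (F b - F a - (LB - LA)) with ((F b - LB) - (F a - LA)) by ring.
    eapply Rle_lt_trans. apply Rabs_triang. rewrite Rabs_Ropp.
    assert (HH1 := Hd' a ltac:(lra)). assert (HH2 := HM b ltac:(lra)). lra.
  - intros x Hx. rewrite Rmin_left, Rmax_right in Hx by lra. apply HD. lra.
  - intros x Hx. rewrite Rmin_left, Rmax_right in Hx by lra. apply Cf. lra.
Qed.

Lemma IL_scale f k l : 0 < k -> Cont0 f -> IL f l -> IL (fun t => f (k * t)) (l / k).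
Proof.
  intros Hk Cf H eps He. destruct (IL_strong _ _ H (eps * k)) as [d [Hd [M [HM HH]]]]. nra.
  exists (d / k). split. apply Rdiv_lt_0_compat; lra. exists (M / k). intros a b Ha Hb.
  assert (Hka : 0 < k * a < d). { split. nra. assert (H0 := Rmult_lt_compat_l k a (d/k) Hk (proj2 Ha)).
    replace (k * (d/k)) with d in H0 by (field; lra). lra. }
  assert (Hkb : M < k * b). { apply (Rmult_lt_compat_l k) in Hb; [|lra].
    replace (k * (M/k)) with M in Hb by (field; lra). lra. }
  assert (Hex : ex_RInt (fun t => f (k * t)) a b).
  { apply ex_RInt_cont. intros x Hx. apply (continuous_comp (fun t => k * t) f).
    apply (ex_derive_continuous (fun t => k * t)). auto_derive. auto.
    apply Cf. assert (0 < Rmin a b) by (apply Rmin_glb_lt; nra). nra. }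
  assert (E : RInt (fun t => f (k * t)) a b = RInt f (k * a) (k * b) / k).
  { assert (E1 := RInt_comp_lin f k 0 a b). rewrite !Rplus_0_r in E1.
    rewrite <- E1. 2: apply ex_RInt_C0; auto; nra.
    rewrite (RInt_ext (fun y : R => scal k (f (k * y + 0))) (fun y => k * f (k * y))).
    2: { intros x _. change (k * f (k * x + 0) = k * f (k * x)). rewrite Rplus_0_r. reflexivity. }
    assert (E2 := RInt_scal (fun y => f (k*y)) a b k Hex).
    change (RInt (fun y => k * f (k*y)) a b = k * RInt (fun y => f (k*y)) a b) in E2.
    rewrite E2. assert (HX : forall X : R, X = k * X / k) by (intros; field; lra). apply HX. }
  rewrite E. replace (RInt f (k * a) (k * b) / k - l / k) with ((RInt f (k * a) (k * b) - l) / k) by (field; lra).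
  unfold Rdiv. rewrite Rabs_mult, (Rabs_right (/k)) by (apply Rle_ge, Rlt_le, Rinv_0_lt_compat; lra).
  apply (Rmult_lt_reg_r k). lra. rewrite Rmult_assoc, Rinv_l, Rmult_1_r by lra. apply HH; lra.
Qed.

Lemma decay_1 b : 1 <= b -> Rabs (exp (-b)) <= 27 / b.
Proof.
  intros Hb. rewrite Rabs_right by (apply Rle_ge, Rlt_le, exp_pos).
  eapply Rle_trans. apply exp_decay3; lra.
  apply Rle_trans with (27 / (1 + b)). 2: { apply Rmult_le_compat_l. lra. apply Rinv_le_contravar; lra. }
  apply Rmult_le_compat_l. lra. apply Rinv_le_contravar. lra.
  simpl. nra.
Qed.

Lemma decay_t b : 1 <= b -> (b + 1) * exp (-b) <= 27 / b.
Proof.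
  intros Hb. assert (H := exp_decay3 b ltac:(lra)). assert (Hp := exp_pos (-b)).
  apply Rle_trans with ((b+1) * (27 / (1 + b)^3)). apply Rmult_le_compat_l; lra.
  replace ((b + 1) * (27 / (1 + b) ^ 3)) with (27 / ((1+b)^2)) by (field; lra).
  apply Rmult_le_compat_l. lra. apply Rinv_le_contravar. lra. simpl. nra.
Qed.

Lemma decay_t2 b : 1 <= b -> b * b * exp (-b) <= 27 / b.
Proof.
  intros Hb. assert (H := exp_decay3 b ltac:(lra)). assert (Hp := exp_pos (-b)).
  apply Rle_trans with (b * b * (27 / (1 + b)^3)). apply Rmult_le_compat_l; nra.
  apply Rle_trans with (27 / b). 2: lra.
  unfold Rdiv. rewrite <- Rmult_assoc, (Rmult_comm (b*b) 27), Rmult_assoc.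
  apply Rmult_le_compat_l. lra.
  apply (Rmult_le_reg_r ((1+b)^3 * b)). apply Rmult_lt_0_compat. apply pow_lt; lra. lra.
  replace (b * b * / (1 + b) ^ 3 * ((1 + b) ^ 3 * b)) with (b*b*b) by (field; lra).
  replace (/ b * ((1 + b) ^ 3 * b)) with ((1+b)^3) by (field; lra). simpl. nra.
Qed.

Lemma IL_exp : IL (fun t => exp (-t)) 1.
Proof.
  replace 1 with (0 - (-1)) by ring.
  apply (IL_antider _ (fun t => - exp (-t))).
  - intros t _. apply (ex_derive_continuous (fun t => exp (-t))). auto_derive. auto.
  - intros t _. auto_derive. auto. ring.
  - replace (-1) with ((fun t => - exp (-t)) 0) by (rewrite Ropp_0, exp_0; ring).
    apply Lim0_cont. apply (ex_derive_continuous (fun t => - exp (-t))). auto_derive. auto.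
  - apply (LimInf_bound _ _ 27). lra. intros b Hb. rewrite Rminus_0_r, Rabs_Ropp. apply decay_1; auto.
Qed.

Lemma IL_texp : IL (fun t => t * exp (-t)) 1.
Proof.
  replace 1 with (0 - (-1)) by ring.
  apply (IL_antider _ (fun t => - (t + 1) * exp (-t))).
  - intros t _. apply (ex_derive_continuous (fun t => t * exp (-t))). auto_derive. auto.
  - intros t _. auto_derive. auto. ring.
  - replace (-1) with ((fun t => - (t+1) * exp (-t)) 0) by (rewrite Ropp_0, exp_0; ring).
    apply Lim0_cont. apply (ex_derive_continuous (fun t => - (t+1) * exp (-t))). auto_derive. auto.
  - apply (LimInf_bound _ _ 27). lra. intros b Hb. rewrite Rminus_0_r.
    rewrite Ropp_mult_distr_l_reverse, Rabs_Ropp, Rabs_right. apply decay_t; auto.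
    apply Rle_ge, Rmult_le_pos. lra. apply Rlt_le, exp_pos.
Qed.

(* boundary term for integration by parts *)
Lemma IL_bp : IL (fun t => t * ln t * exp (-t) - (ln t + 1) * exp (-t)) 0.
Proof.
  replace 0 with (0 - 0) by ring.
  apply (IL_antider _ (fun t => - (t * ln t * exp (-t)))).
  - intros t Ht. apply (ex_derive_continuous (fun t => t * ln t * exp (-t) - (ln t + 1) * exp (-t))). auto_derive. lra.
  - intros t Ht. auto_derive. lra. field. lra.
  - apply (Lim0_bound _ _ 2). lra. intros a Ha. rewrite Rminus_0_r, Rabs_Ropp, Rabs_mult.
    assert (H1 := t_ln_bound a ltac:(lra)). assert (H2 : Rabs (exp (-a)) <= 1).
    { rewrite Rabs_right by (apply Rle_ge, Rlt_le, exp_pos). rewrite <- exp_0. apply exp_le_mono; lra. }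
    assert (H3 := Rabs_pos (exp (-a))). assert (H4 := Rabs_pos (a * ln a)). nra.
  - apply (LimInf_bound _ _ 27). lra. intros b Hb. rewrite Rminus_0_r, Rabs_Ropp.
    assert (0 <= ln b) by (rewrite <- ln_1; apply ln_le; lra).
    assert (ln b < b) by (apply ln_lt_self; lra). assert (Hp := exp_pos (-b)).
    rewrite Rabs_right by (apply Rle_ge; repeat apply Rmult_le_pos; lra).
    eapply Rle_trans. 2: apply decay_t2; auto. apply Rmult_le_compat_r. lra. nra.
Qed.

Lemma bernoulli m x : 0 <= x <= 1 -> 1 - INR m * x <= (1 - x) ^ m.
Proof.
  intros Hx. induction m as [|m IH]. simpl. lra.
  rewrite S_INR. simpl. assert (0 <= 1 - x) by lra. assert (0 <= INR m) by apply pos_INR.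
  apply Rle_trans with ((1 - x) * (1 - INR m * x)). nra. apply Rmult_le_compat_l; lra.
Qed.

Lemma pow_le1 m x : 0 <= x <= 1 -> 0 <= x ^ m <= 1.
Proof.
  intros Hx. induction m. simpl; lra. simpl. split. apply Rmult_le_pos; lra. nra.
Qed.

Lemma exp_pow_n x m : exp x ^ m = exp (INR m * x).
Proof.
  induction m. simpl. rewrite Rmult_0_l, exp_0; auto.
  rewrite S_INR. simpl. rewrite IHm, <- exp_plus. f_equal. ring.
Qed.

Lemma is_derive_sum (g dg : nat -> R -> R) n t :
  (forall j, is_derive (g j) t (dg j t)) ->
  is_derive (fun t => sum_f_R0 (fun j => g j t) n) t (sum_f_R0 (fun j => dg j t) n).
Proof.
  intros H. induction n. simpl. apply H. simpl.
  apply (is_derive_plus (fun t => sum_f_R0 (fun j => g j t) n) (g (S n))); auto.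
Qed.

Lemma sum_scal_l (f : nat -> R) c n : sum_f_R0 (fun j => c * f j) n = c * sum_f_R0 f n.
Proof. induction n; simpl; [ring|rewrite IHn; ring]. Qed.

Definition Pn (n : nat) (t : R) := (1 - t / INR n) ^ n.
Definition Hs (n : nat) := sum_f_R0 (fun k => / INR (S k)) n.
Definition Gs (n : nat) := INR n / (INR n + 1) * (ln (INR n) - Hs n).

Lemma INR_ge1 n : (1 <= n)%nat -> 1 <= INR n.
Proof. intros H. apply (le_INR 1) in H. simpl in H. auto. Qed.

Lemma Pn_bounds n t : (1 <= n)%nat -> 0 <= t <= INR n ->
  0 <= Pn n t <= exp (-t) /\ exp (-t) - Pn n t <= t * t * exp (-t) / INR n.
Proof.
  intros Hn Ht. assert (HN := INR_ge1 n Hn). set (N := INR n) in *.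
  set (x := t / N). assert (Hx : 0 <= x <= 1).
  { unfold x. split. apply Rdiv_le_0_compat; lra. apply (Rmult_le_reg_r N). lra.
    unfold Rdiv. rewrite Rmult_assoc, Rinv_l; lra. }
  assert (Et : t = N * x) by (unfold x; field; lra).
  unfold Pn. fold N. fold x.
  assert (E1 : exp (-t) = exp (-x) ^ n) by (rewrite exp_pow_n; f_equal; fold N; rewrite Et; ring).
  assert (H1 : 1 - x <= exp (-x)) by (assert (H := exp_ineq1_le (-x)); lra).
  split. split. apply pow_le; lra. rewrite E1. apply pow_incr; lra.
  assert (H2 : 1 + x <= exp x) by apply exp_ineq1_le.
  assert (H3 : 1 - x * x <= (1 - x) * exp x) by nra.
  assert (H4 : 1 - INR n * (x * x) <= (1 - x * x) ^ n) by (apply bernoulli; nra).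
  assert (H5 : (1 - x * x) ^ n <= ((1 - x) * exp x) ^ n) by (apply pow_incr; nra).
  rewrite Rpow_mult_distr, exp_pow_n in H5. fold N in H4, H5.
  replace (N * x) with t in H5 by lra.
  assert (Hp := exp_pos (-t)).
  assert (E3 : exp t * exp (-t) = 1) by (rewrite <- exp_plus; replace (t + -t) with 0 by ring; apply exp_0).
  assert (E4 : t * t * exp (-t) / N = N * (x * x) * exp (-t)).
  { rewrite Et. field. lra. }
  rewrite E4.
  assert (H6 : (1 - N * (x * x)) * exp (-t) <= (1 - x) ^ n * exp t * exp (-t)).
  { apply Rmult_le_compat_r; lra. }
  rewrite Rmult_assoc, E3, Rmult_1_r in H6. nra.
Qed.

Definition Un (n : nat) (t : R) := INR n / (INR n + 1) * (1 - (1 - t / INR n) ^ (S n)).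
Definition Sn (n : nat) (t : R) := sum_f_R0 (fun j => (1 - t / INR n) ^ (S j) / INR (S j)) n.
Definition Psi (n : nat) (t : R) := Un n t * ln t + INR n / (INR n + 1) * Sn n t.

Lemma geom_sum k n : k <> 1 -> sum_f_R0 (fun j => k ^ j) n = (1 - k ^ S n) / (1 - k).
Proof. apply tech3. Qed.

Lemma Psi_deriv n t : (1 <= n)%nat -> 0 < t -> is_derive (Psi n) t (Pn n t * ln t).
Proof.
  intros Hn Ht. assert (HN := INR_ge1 n Hn).
  assert (D1 : is_derive (fun t => Un n t * ln t) t
     (INR n / (INR n + 1) * ((INR n + 1) * (1 - t / INR n) ^ n / INR n) * ln t + Un n t / t)).
  { unfold Un. auto_derive. lra. destruct n as [|m]. lia. cbv iota beta.
    set (N := INR (S m)) in *. change ((1 - t / N) ^ S (S m)) with ((1 - t/N) * (1 - t/N)^(S m)).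
    unfold Rminus, Rdiv. set (X := (1 + - (t * / N)) ^ S m). field. lra. }
  assert (D2 : is_derive (Sn n) t (sum_f_R0 (fun j => - / INR n * (1 - t / INR n) ^ j) n)).
  { unfold Sn. apply (is_derive_sum (fun j t => (1 - t / INR n) ^ S j / INR (S j))
                       (fun j t => - / INR n * (1 - t / INR n) ^ j)).
    intros j. auto_derive. lra.
    change (match j with 0%nat => 1 | S _ => INR j + 1 end) with (INR (S j)).
    assert (0 < INR (S j)) by (apply lt_0_INR; lia). unfold Rminus, Rdiv. field. lra. }
  assert (D := is_derive_plus _ _ t _ _ D1 (is_derive_scal _ _ (INR n / (INR n + 1)) _ D2)).
  unfold Psi.
  match type of D with is_derive _ _ ?v => replace (Pn n t * ln t) with v end.
  - eapply is_derive_ext; [|exact D]. intros; reflexivity.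
  - change (plus ?a ?b) with (a + b).
    rewrite (sum_scal_l (fun j => (1 - t / INR n) ^ j)), geom_sum.
    2: { intro E. assert (t / INR n = 0) by lra. assert (t = (t / INR n) * INR n) by (field; lra).
         rewrite H in H0. lra. }
    unfold Un, Pn. set (N := INR n) in *. change ((1 - t / N) ^ S n) with ((1 - t/N) * (1 - t/N)^n).
    unfold Rminus, Rdiv. set (X := (1 + - (t * / N)) ^ n). clearbody X N. match goal with |- ?a = ?b => change (@eq R a b) end. field. repeat split; lra.
Qed.


Lemma Psi_N n : (1 <= n)%nat -> Psi n (INR n) = INR n / (INR n + 1) * ln (INR n).
Proof.
  intros Hn. assert (HN := INR_ge1 n Hn). unfold Psi, Un, Sn.
  replace (1 - INR n / INR n) with 0 by (field; lra).
  rewrite (sum_eq _ (fun _ => 0)). rewrite sum_cte. simpl. ring.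
  intros i _. simpl. unfold Rdiv. ring.
Qed.

Lemma Pn_cont n t : (1 <= n)%nat -> 0 < t -> continuous (fun t => Pn n t * ln t) t.
Proof.
  intros Hn Ht. apply (ex_derive_continuous (fun t => Pn n t * ln t)). unfold Pn. auto_derive. lra.
Qed.

Lemma RInt_Pn n a : (1 <= n)%nat -> 0 < a <= INR n ->
  RInt (fun t => Pn n t * ln t) a (INR n) = Psi n (INR n) - Psi n a.
Proof.
  intros Hn Ha. apply is_RInt_derive_R.
  - intros x Hx. rewrite Rmin_left in Hx by lra. apply Psi_deriv; auto; lra.
  - intros x Hx. rewrite Rmin_left in Hx by lra. apply Pn_cont; auto; lra.
Qed.

Lemma Pn_int_bound n a : (1 <= n)%nat -> 0 < a <= 1 -> a <= INR n ->
  Rabs (RInt (fun t => Pn n t * ln t) a (INR n) - Gs n) <= 2 * sqrt a + 2 * a.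
Proof.
  intros Hn Ha HaN. assert (HN := INR_ge1 n Hn).
  rewrite RInt_Pn by (auto; lra). rewrite Psi_N by auto.
  set (N := INR n) in *. set (x := a / N).
  assert (Hx : 0 <= x <= 1).
  { unfold x. split. apply Rdiv_le_0_compat; lra. apply (Rmult_le_reg_r N). lra.
    unfold Rdiv. rewrite Rmult_assoc, Rinv_l; lra. }
  assert (Ea : a = N * x) by (unfold x; field; lra).
  assert (HNN : 0 < N / (N + 1) <= 1).
  { split. apply Rdiv_lt_0_compat; lra. apply (Rmult_le_reg_r (N+1)). lra.
    unfold Rdiv. rewrite Rmult_assoc, Rinv_l; lra. }
  assert (HU : 0 <= Un n a <= a).
  { unfold Un. fold N. fold x. assert (B := bernoulli (S n) x Hx). rewrite S_INR in B. fold N in B.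
    assert (B2 := pow_le1 (S n) (1 - x) ltac:(lra)).
    split. apply Rmult_le_pos; lra.
    apply Rle_trans with (N / (N + 1) * ((N + 1) * x)). apply Rmult_le_compat_l; lra.
    right. rewrite Ea. field. lra. }
  assert (HS : Rabs (Sn n a - Hs n) <= 2 * a).
  { unfold Sn, Hs. fold N. fold x. rewrite <- minus_sum. eapply Rle_trans. apply Rsum_abs.
    eapply Rle_trans. apply (sum_Rle _ (fun _ => x)).
    - intros j _. assert (0 < INR (S j)) by (apply lt_0_INR; lia).
      replace ((1 - x) ^ S j / INR (S j) - / INR (S j)) with (- ((1 - (1 - x) ^ S j) / INR (S j))) by (field; lra).
      rewrite Rabs_Ropp. assert (B := bernoulli (S j) x Hx). assert (B2 := pow_le1 (S j) (1 - x) ltac:(lra)).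
      rewrite Rabs_right. 2: { apply Rle_ge, Rdiv_le_0_compat; lra. }
      apply (Rmult_le_reg_r (INR (S j))). lra. unfold Rdiv. rewrite Rmult_assoc, Rinv_l by lra. lra.
    - rewrite sum_cte, S_INR. fold N. rewrite Ea. nra. }
  replace (N / (N + 1) * ln N - Psi n a - Gs n) with
    (- (Un n a * ln a) - N / (N + 1) * (Sn n a - Hs n)) by (unfold Gs, Psi; fold N; ring).
  eapply Rle_trans. apply Rabs_triang. rewrite !Rabs_Ropp, !Rabs_mult.
  assert (H1 := t_ln_bound a Ha). rewrite Rabs_mult in H1.
  assert (Hl := Rabs_pos (ln a)).
  rewrite (Rabs_right (Un n a)) by lra. rewrite (Rabs_right (N / (N+1))) by lra.
  rewrite (Rabs_right a) in H1 by lra.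
  assert (Un n a * Rabs (ln a) <= a * Rabs (ln a)) by (apply Rmult_le_compat_r; lra).
  assert (N / (N + 1) * Rabs (Sn n a - Hs n) <= 1 * (2 * a)).
  { apply Rmult_le_compat; try lra. apply Rabs_pos. }
  lra.
Qed.

Definition ell (t : R) := exp (-t) * ln t.

Lemma f2_bound n t : (1 <= n)%nat -> 0 < t <= INR n ->
  Rabs ((exp (-t) - Pn n t) * ln t) <= (512 / INR n) / (sqrt t * (1 + t)).
Proof.
  intros Hn Ht. assert (HN := INR_ge1 n Hn).
  destruct (Pn_bounds n t Hn ltac:(lra)) as [[P1 P2] P3].
  assert (Hs := sqrt_pos_lt t ltac:(lra)).
  assert (L := abs_ln_bound t ltac:(lra)).
  assert (E := exp_decay4 t ltac:(lra)). assert (Ep := exp_pos (-t)).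
  rewrite Rabs_mult, (Rabs_right (exp (-t) - Pn n t)) by lra.
  assert (Hl := Rabs_pos (ln t)).
  apply Rle_trans with ((t * t * exp (-t) / INR n) * (2 * (1 + t) / sqrt t)).
  { apply Rmult_le_compat; lra. }
  apply Rle_trans with ((t * t * (256 / (1+t)^4) / INR n) * (2 * (1 + t) / sqrt t)).
  { apply Rmult_le_compat_r. apply Rdiv_le_0_compat; lra.
    unfold Rdiv. apply Rmult_le_compat_r. left; apply Rinv_0_lt_compat; lra.
    apply Rmult_le_compat_l; nra. }
  replace ((t * t * (256 / (1+t)^4) / INR n) * (2 * (1 + t) / sqrt t)) with
    ((512 / INR n) / (sqrt t * (1 + t)) * (t * t / ((1+t) * (1+t)))) by (simpl; field; lra).
  rewrite <- (Rmult_1_r ((512 / INR n) / (sqrt t * (1 + t)))) at 2.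
  apply Rmult_le_compat_l. apply Rdiv_le_0_compat. apply Rdiv_le_0_compat; lra. nra.
  apply (Rmult_le_reg_r ((1+t)*(1+t))). nra. unfold Rdiv. rewrite Rmult_assoc, Rinv_l by nra. nra.
Qed.

Lemma gamma_bound n a b : (1 <= n)%nat -> 0 < a <= 1 -> 1 <= b <= INR n ->
  Rabs (RInt ell a b - Gs n) <= 2 * sqrt a + 2 * a + 512 / INR n * PI + 27 / b.
Proof.
  intros Hn Ha Hb. assert (HN := INR_ge1 n Hn).
  set (f1 := fun t => Pn n t * ln t). set (f2 := fun t => (exp (-t) - Pn n t) * ln t).
  assert (C1 : forall t, 0 < t -> continuous f1 t) by (intros; apply Pn_cont; auto).
  assert (C2 : forall t, 0 < t -> continuous f2 t).
  { intros t Ht. apply (ex_derive_continuous f2). unfold f2, Pn. auto_derive. lra. }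
  assert (X1 : forall u v, 0 < u -> 0 < v -> ex_RInt f1 u v) by (intros; apply ex_RInt_C0; auto).
  assert (X2 : forall u v, 0 < u -> 0 < v -> ex_RInt f2 u v) by (intros; apply ex_RInt_C0; auto).
  assert (E1 : RInt ell a b = RInt f1 a b + RInt f2 a b).
  { rewrite <- (RInt_plus f1 f2) by (apply X1 || apply X2; lra).
    apply RInt_ext. intros; unfold ell, f1, f2; change (plus ?x ?y) with (x + y); reqR; ring. }
  assert (E2 : RInt f1 a (INR n) = RInt f1 a b + RInt f1 b (INR n)).
  { symmetry. apply (RInt_Chasles f1); apply X1; lra. }
  assert (B1 := Pn_int_bound n a Hn Ha ltac:(lra)). fold f1 in B1.
  assert (B2 : Rabs (RInt f2 a b) <= 512 / INR n * PI).
  { apply RInt_bound_sqrt_pi. apply Rdiv_le_0_compat; lra. lra.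
    intros; apply C2; lra. intros t Ht; apply f2_bound; auto; lra. }
  assert (B3 : 0 <= RInt f1 b (INR n) <= 27 / b).
  { split.
    - apply RInt_ge_0. lra. apply X1; lra. intros t Ht. unfold f1.
      destruct (Pn_bounds n t Hn ltac:(lra)) as [[P1 P2] P3].
      apply Rmult_le_pos. lra. rewrite <- ln_1; apply ln_le; lra.
    - apply Rle_trans with (RInt (fun t => t * exp (-t)) b (INR n)).
      + apply RInt_le. lra. apply X1; lra.
        apply ex_RInt_cont. intros; apply (ex_derive_continuous (fun t => t * exp (-t))); auto_derive; auto.
        intros t Ht. unfold f1. destruct (Pn_bounds n t Hn ltac:(lra)) as [[P1 P2] P3].
        assert (0 <= ln t) by (rewrite <- ln_1; apply ln_le; lra).
        assert (ln t < t) by (apply ln_lt_self; lra). nra.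
      + rewrite (is_RInt_derive_R (fun t => - (t + 1) * exp (-t))).
        * assert (H := decay_t b ltac:(lra)). assert (Hp := exp_pos (- INR n)).
          assert (0 <= (INR n + 1) * exp (- INR n)) by (apply Rmult_le_pos; lra). lra.
        * intros; auto_derive; auto; ring.
        * intros; apply (ex_derive_continuous (fun t => t * exp (-t))); auto_derive; auto. }
  replace (RInt ell a b - Gs n) with ((RInt f1 a (INR n) - Gs n) - RInt f1 b (INR n) + RInt f2 a b) by lra.
  eapply Rle_trans. apply Rabs_triang. eapply Rle_trans. apply Rplus_le_compat_r. apply Rabs_triang.
  rewrite Rabs_Ropp. rewrite (Rabs_right (RInt f1 b (INR n))) by lra. lra.
Qed.

Lemma nat_large x : exists n : nat, x < INR n.
Proof.
  destruct (archimed (Rabs x)) as [H1 _].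
  exists (Z.to_nat (up (Rabs x))). rewrite INR_IZR_INZ, Z2Nat.id.
  assert (Hx := Rle_abs x). lra.
  apply le_IZR. assert (Hx := Rabs_pos x). lra.
Qed.

Lemma small_a eps : 0 < eps -> exists a0, 0 < a0 <= 1 /\ forall a, 0 < a < a0 -> 2 * sqrt a + 2 * a < eps.
Proof.
  intros He. exists (Rmin 1 ((eps/4) * (eps/4))). split. split. apply Rmin_glb_lt; nra. apply Rmin_l.
  intros a Ha. assert (a < 1) by (eapply Rlt_le_trans; [apply Ha|apply Rmin_l]).
  assert (a < (eps/4) * (eps/4)) by (eapply Rlt_le_trans; [apply Ha|apply Rmin_r]).
  assert (sqrt a < eps / 4). { rewrite <- (sqrt_square (eps/4)) by lra. apply sqrt_lt_1_alt. lra. }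
  assert (a <= sqrt a). { assert (Hs := sqrt_sqrt a ltac:(lra)). assert (0 <= sqrt a) by apply sqrt_pos. nra. }
  lra.
Qed.

Lemma small_inv C eps : 0 < eps -> exists b, 1 <= b /\ forall x, b <= x -> C / x < eps.
Proof.
  intros He. exists (Rmax 1 (Rabs C / eps + 2)). split. apply Rmax_l. intros x Hx.
  assert (1 <= x) by (eapply Rle_trans; [apply Rmax_l|apply Hx]).
  assert (Rabs C / eps + 2 <= x) by (eapply Rle_trans; [apply Rmax_r|apply Hx]).
  apply Rle_lt_trans with (Rabs C / x). unfold Rdiv. apply Rmult_le_compat_r.
  left; apply Rinv_0_lt_compat; lra. apply Rle_abs.
  apply (Rmult_lt_reg_r x). lra. unfold Rdiv. rewrite Rmult_assoc, Rinv_l, Rmult_1_r by lra.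
  assert (Rabs C < eps * (x - 1)). { apply (Rmult_lt_reg_r (/ eps)). apply Rinv_0_lt_compat; lra.
    replace (eps * (x - 1) * / eps) with (x - 1) by (field; lra). unfold Rdiv in *. lra. }
  nra.
Qed.

Lemma Gs_cauchy : Cauchy_crit Gs.
Proof.
  intros eps He.
  destruct (small_a (eps/8) ltac:(lra)) as [a0 [Ha0 Ha]].
  destruct (small_inv 27 (eps/8) ltac:(lra)) as [b [Hb1 Hb]].
  destruct (small_inv (512 * PI) (eps/8) ltac:(lra)) as [c [Hc1 Hc]].
  destruct (nat_large (Rmax b c)) as [N0 HN0].
  assert (b <= INR N0) by (assert (Hm := Rmax_l b c); lra).
  assert (c <= INR N0) by (assert (Hm := Rmax_r b c); lra).
  exists N0. intros n m Hn Hm.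
  assert (Hn' : INR N0 <= INR n) by (apply le_INR; lia).
  assert (Hm' : INR N0 <= INR m) by (apply le_INR; lia).
  assert (1 <= n)%nat. { apply INR_le. simpl. lra. }
  assert (1 <= m)%nat. { apply INR_le. simpl. lra. }
  set (a := a0 / 2).
  assert (Hx := Ha a ltac:(unfold a; lra)).
  assert (G1 := gamma_bound n a b ltac:(auto) ltac:(unfold a; lra) ltac:(lra)).
  assert (G2 := gamma_bound m a b ltac:(auto) ltac:(unfold a; lra) ltac:(lra)).
  assert (Q1 := Hb b ltac:(lra)).
  assert (Q2 := Hc (INR n) ltac:(lra)). assert (Q3 := Hc (INR m) ltac:(lra)).
  replace (512 / INR n * PI) with (512 * PI / INR n) in G1 by (field; lra).
  replace (512 / INR m * PI) with (512 * PI / INR m) in G2 by (field; lra).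
  unfold Rdist. replace (Gs n - Gs m) with ((RInt ell a b - Gs m) - (RInt ell a b - Gs n)) by ring.
  eapply Rle_lt_trans. apply Rabs_triang. rewrite Rabs_Ropp. lra.
Qed.

Lemma gamma_limit : exists g, Un_cv Gs g /\ IL ell g.
Proof.
  destruct (Rcomplete.R_complete Gs Gs_cauchy) as [g Hg]. exists g. split. auto.
  intros eps He.
  destruct (small_a (eps/4) ltac:(lra)) as [a0 [Ha0 Ha]].
  destruct (small_inv 27 (eps/4) ltac:(lra)) as [b [Hb1 Hb]].
  destruct (small_inv (512 * PI) (eps/4) ltac:(lra)) as [c [Hc1 Hc]].
  exists a0. split. lra. exists b. intros a x Ha1 Hx1.
  destruct (Hg (eps/4) ltac:(lra)) as [N1 HN1].
  destruct (nat_large (Rmax x c)) as [N0 HN0].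
  set (n := max N0 N1).
  assert (INR N0 <= INR n) by (apply le_INR; unfold n; lia).
  assert (x <= INR n) by (assert (Hm := Rmax_l x c); lra).
  assert (c <= INR n) by (assert (Hm := Rmax_r x c); lra).
  assert (1 <= n)%nat. { apply INR_le. simpl. lra. }
  assert (Hx := Ha a Ha1).
  assert (G1 := gamma_bound n a x ltac:(auto) ltac:(lra) ltac:(lra)).
  assert (Q1 := Hb x ltac:(lra)). assert (Q2 := Hc (INR n) ltac:(lra)).
  assert (Q3 := HN1 n ltac:(unfold n; lia)). unfold Rdist in Q3.
  replace (512 / INR n * PI) with (512 * PI / INR n) in G1 by (field; lra).
  replace (RInt ell a x - g) with ((RInt ell a x - Gs n) + (Gs n - g)) by ring.
  eapply Rle_lt_trans. apply Rabs_triang. lra.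
Qed.

Lemma euler_gamma_val g : Un_cv Gs g -> euler_gamma = - g.
Proof.
  intros Hg. apply is_lim_seq_Reals in Hg.
  assert (Hinv : is_lim_seq (fun n => / INR n) 0).
  { replace (Finite 0) with (Rbar_inv p_infty) by reflexivity. apply is_lim_seq_inv.
    apply is_lim_seq_INR. discriminate. }
  assert (Hln : is_lim_seq (fun n => ln (1 + / INR n)) 0).
  { assert (H1 : is_lim_seq (fun n => 1 + / INR n) 1).
    { replace (Finite 1) with (Finite (1+0)) by (f_equal; ring). apply is_lim_seq_plus'. apply is_lim_seq_const. auto. }
    rewrite <- ln_1. apply (is_lim_seq_continuous ln (fun n => 1 + / INR n) 1); auto.
    apply continuity_pt_filterlim. apply (ex_derive_continuous ln). auto_derive. lra. }
  assert (L : is_lim_seq (fun n => - ln (1 + / INR n) - (1 + / INR n) * Gs n) (- g)).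
  { replace (- g) with (- 0 - (1 + 0) * g) by ring. apply is_lim_seq_minus'.
    apply (is_lim_seq_opp _ (Finite 0)); auto. apply is_lim_seq_mult'; auto. apply is_lim_seq_plus'. apply is_lim_seq_const. auto. }
  unfold euler_gamma. rewrite (is_lim_seq_unique _ (-g)). reflexivity.
  eapply is_lim_seq_ext_loc. 2: apply L.
  exists 1%nat. intros n Hn. assert (HN := INR_ge1 n Hn).
  unfold Gs, Hs. rewrite S_INR.
  replace (1 + / INR n) with ((INR n + 1) / INR n) by (field; lra).
  rewrite ln_div by lra. field. lra.
Qed.

Lemma cont_simple (f : R -> R) : (forall t, 0 < t -> ex_derive f t) -> Cont0 f.
Proof. intros H t Ht. apply (ex_derive_continuous (V:=R_NormedModule)). auto. Qed.

Lemma IL_ell : IL ell (- euler_gamma).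
Proof.
  destruct gamma_limit as [g [Hg HI]]. rewrite (euler_gamma_val g Hg). rewrite Ropp_involutive. auto.
Qed.

Lemma IL_u : IL (fun t => t * ln t * exp (-t)) (1 - euler_gamma).
Proof.
  assert (H := IL_plus _ _ _ _
     (cont_simple (fun t => t * ln t * exp (-t) - (ln t + 1) * exp (-t)) ltac:(intros; auto_derive; lra))
     (cont_simple ell ltac:(intros; unfold ell; auto_derive; lra)) IL_bp IL_ell).
  assert (H2 := IL_plus _ _ _ _
     (cont_simple (fun t => t * ln t * exp (- t) - (ln t + 1) * exp (- t) + ell t) ltac:(intros; unfold ell; auto_derive; lra))
     (cont_simple (fun t => exp (-t)) ltac:(intros; auto_derive; lra)) H IL_exp).
  simpl in H2. eapply IL_unique_ext. eapply IL_ext. 2: apply H2.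
  intros t Ht. unfold ell. ring. ring.
Qed.

Lemma IL_term_ln k : 0 < k ->
  IL (fun t => t * ln t * exp (- (k * t))) ((1 - euler_gamma - ln k) / (k * k)).
Proof.
  intros Hk.
  assert (Cu : Cont0 (fun t => t * ln t * exp (-t))) by (apply cont_simple; intros; auto_derive; lra).
  assert (Cv : Cont0 (fun t => t * exp (-t))) by (apply cont_simple; intros; auto_derive; lra).
  assert (Hu := IL_scale _ k _ Hk Cu IL_u).
  assert (Hv := IL_scale _ k _ Hk Cv IL_texp).
  assert (Cu' : Cont0 (fun t => k * t * ln (k * t) * exp (- (k * t)))).
  { apply cont_simple; intros; auto_derive; nra. }
  assert (Cv' : Cont0 (fun t => k * t * exp (- (k * t)))).
  { apply cont_simple; intros; auto_derive; nra. }
  assert (H1 := IL_scal _ (/ k) _ Cu' Hu).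
  assert (H2 := IL_scal _ (- (ln k / k)) _ Cv' Hv).
  assert (H := IL_plus _ _ _ _ (cont_simple (fun t => / k * (k * t * ln (k * t) * exp (- (k * t)))) ltac:(intros; auto_derive; nra))
                               (cont_simple (fun t => - (ln k / k) * (k * t * exp (- (k * t)))) ltac:(intros; auto_derive; nra)) H1 H2).
  eapply IL_unique_ext. eapply IL_ext. 2: apply H.
  - intros t Ht. simpl. rewrite ln_mult by lra. field. lra.
  - field. lra.
Qed.

Lemma IL_term k : 0 < k -> IL (fun t => t * exp (- (k * t))) (1 / (k * k)).
Proof.
  intros Hk.
  assert (Cv : Cont0 (fun t => t * exp (-t))) by (apply cont_simple; intros; auto_derive; lra).
  assert (Hv := IL_scale _ k _ Hk Cv IL_texp).
  assert (Cv' : Cont0 (fun t => k * t * exp (- (k * t)))).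
  { apply cont_simple; intros; auto_derive; nra. }
  assert (H := IL_scal _ (/ k) _ Cv' Hv).
  eapply IL_unique_ext. eapply IL_ext. 2: apply H.
  - intros t Ht. simpl. field. lra.
  - field. lra.
Qed.

Fixpoint psum (f : nat -> R) (K : nat) : R :=
  match K with O => 0 | S K' => psum f K' + f K' end.

Lemma psum_S f K : psum f (S K) = psum f K + f K.
Proof. reflexivity. Qed.

Lemma psum_sum_n f n : psum f (S n) = sum_n f n.
Proof.
  induction n. simpl. rewrite sum_O. ring.
  rewrite sum_Sn. change (psum f (S (S n))) with (psum f (S n) + f (S n)). rewrite IHn. reflexivity.
Qed.

Lemma psum_ext f g K : (forall j, (j < K)%nat -> f j = g j) -> psum f K = psum g K.
Proof. induction K; intros H; simpl; auto. rewrite IHK, H; auto. Qed.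

Lemma geom2 y K : y * y <> 1 -> psum (fun j => y ^ (2 * j)) K = (1 - y ^ (2 * K)) / (1 - y * y).
Proof.
  intros Hy. induction K. simpl. field. intro; apply Hy; lra.
  rewrite psum_S, IHK. replace (2 * S K)%nat with (2 * K + 2)%nat by lia. rewrite pow_add.
  simpl. field. intro; apply Hy; lra.
Qed.

Definition atser (x : R) (K : nat) := psum (fun j => x ^ (2 * j + 1) / INR (2 * j + 1)) K.

Lemma artanh_deriv y : -1 < y < 1 -> is_derive artanh y (/ (1 - y * y)).
Proof.
  intros Hy. unfold artanh. auto_derive.
  - split. lra. split. 2: auto. apply Rmult_lt_0_compat. lra. apply Rinv_0_lt_compat; lra.
  - field. repeat split; intro; nra.
Qed.

Lemma atser_deriv y K : is_derive (fun y => atser y K) y (psum (fun j => y ^ (2 * j)) K).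
Proof.
  induction K. simpl. unfold atser; simpl. apply (is_derive_const (V:=R_NormedModule)).
  unfold atser. rewrite psum_S.
  apply (is_derive_ext (fun y => psum (fun j => y ^ (2 * j + 1) / INR (2 * j + 1)) K + y ^ (2 * K + 1) / INR (2 * K + 1))).
  { intros; rewrite psum_S; reflexivity. }
  apply (is_derive_plus (fun y => psum (fun j => y ^ (2 * j + 1) / INR (2 * j + 1)) K)
          (fun y => y ^ (2 * K + 1) / INR (2 * K + 1))). apply IHK.
  auto_derive. auto. replace (K + (K + 0) + 1)%nat with (2 * K + 1)%nat by lia.
  replace (pred (2 * K + 1)) with (2 * K)%nat by lia.
  reqR. field. apply not_0_INR. lia.
Qed.

Lemma artanh_rem x K : 0 <= x < 1 ->
  0 <= artanh x - atser x K <= x ^ (2 * K + 1) / (INR (2 * K + 1) * (1 - x * x)).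
Proof.
  intros Hx. set (h := fun y => artanh y - atser y K).
  set (dh := fun y => y ^ (2 * K) / (1 - y * y)).
  assert (Hd : forall y, -1 < y < 1 -> is_derive h y (dh y)).
  { intros y Hy. unfold h, dh.
    assert (D := is_derive_minus _ _ y _ _ (artanh_deriv y Hy) (atser_deriv y K)).
    eapply is_derive_ext. 2: { eapply (is_derive_ext _ _ _ _ (fun _ => eq_refl)).
      replace (y ^ (2 * K) / (1 - y * y)) with (minus (/ (1 - y * y)) (psum (fun j => y ^ (2 * j)) K)).
      apply D. change (minus ?a ?b) with (a - b). rewrite geom2 by nra. reqR. field. nra. }
    intros; reflexivity. }
  assert (Hc : forall y, -1 < y < 1 -> continuous dh y).
  { intros y Hy. apply (ex_derive_continuous dh). unfold dh. auto_derive. nra. }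
  assert (E : h x - h 0 = RInt dh 0 x).
  { symmetry. apply is_RInt_derive_R; rewrite Rmin_left, Rmax_right by lra; intros; [apply Hd|apply Hc]; lra. }
  assert (H0 : h 0 = 0).
  { unfold h, artanh, atser. rewrite (psum_ext _ (fun _ => 0)). 2: { intros; rewrite pow_i by lia. unfold Rdiv; ring. }
    replace ((1 + 0) / (1 - 0)) with 1 by field. rewrite ln_1.
    assert (forall K, psum (fun _ => 0) K = 0) by (induction K0; simpl; auto; rewrite IHK0; ring). rewrite H. ring. }
  rewrite H0, Rminus_0_r in E. change (artanh x - atser x K) with (h x). rewrite E.
  assert (Hex : ex_RInt dh 0 x) by (apply ex_RInt_cont; rewrite Rmin_left, Rmax_right by lra; intros; apply Hc; lra).
  split.
  - apply RInt_ge_0. lra. auto. intros y Hy. unfold dh. apply Rdiv_le_0_compat. apply pow_le; lra. nra.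
  - apply Rle_trans with (RInt (fun y => y ^ (2 * K) / (1 - x * x)) 0 x).
    + apply RInt_le. lra. auto. apply ex_RInt_cont. intros. apply (ex_derive_continuous (fun y => y ^ (2 * K) / (1 - x * x))).
      auto_derive. nra.
      intros y Hy. unfold dh. unfold Rdiv. apply Rmult_le_compat_l. apply pow_le; lra.
      apply Rinv_le_contravar; nra.
    + right. rewrite (is_RInt_derive_R (fun y => y ^ (2 * K + 1) / (INR (2 * K + 1) * (1 - x * x)))).
      * rewrite pow_i by lia. unfold Rdiv. ring.
      * intros y _. auto_derive. auto. replace (K + (K + 0) + 1)%nat with (2 * K + 1)%nat by lia.
        replace (pred (2 * K + 1)) with (2 * K)%nat by lia. field. split. intro; nra. apply not_0_INR; lia.
      * intros y _. apply (ex_derive_continuous (fun y => y ^ (2 * K) / (1 - x * x))). auto_derive. nra.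
Qed.

Definition A (t : R) := artanh (exp (-t)).
Definition tser (t : R) (K : nat) := psum (fun j => exp (- (INR (2 * j + 1) * t)) / INR (2 * j + 1)) K.

Lemma exp_neg_lt1 t : 0 < t -> 0 < exp (-t) < 1.
Proof. intros Ht. split. apply exp_pos. rewrite <- exp_0. apply exp_increasing. lra. Qed.

Lemma A_rem t K : 0 < t -> 0 <= A t - tser t K <= exp (-t) * (1 + 2 * t) / (2 * t) / INR (2 * K + 1).
Proof.
  intros Ht. destruct (exp_neg_lt1 t Ht) as [X1 X2]. set (x := exp (-t)) in *.
  assert (E : tser t K = atser x K).
  { unfold tser, atser. apply psum_ext. intros j _. unfold x. rewrite exp_pow_n. f_equal. f_equal. f_equal. ring. }
  rewrite E. unfold A. fold x. destruct (artanh_rem x K ltac:(lra)) as [R1 R2]. split. auto.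
  eapply Rle_trans. apply R2.
  assert (HI : 0 < INR (2 * K + 1)) by (apply lt_0_INR; lia).
  assert (Hxx : x * x = exp (- (2 * t))) by (unfold x; rewrite <- exp_plus; f_equal; ring).
  assert (Hb : x * x * (1 + 2 * t) <= 1).
  { rewrite Hxx. assert (H := exp_ineq1_le (2 * t)).
    assert (exp (- (2*t)) * exp (2 * t) = 1) by (rewrite <- exp_plus; replace (- (2*t) + 2*t) with 0 by ring; apply exp_0).
    assert (0 < exp (- (2*t))) by apply exp_pos. nra. }
  assert (Hp : x ^ (2 * K + 1) <= x).
  { rewrite pow_add, pow_1. assert (H := pow_le1 (2 * K) x ltac:(lra)). nra. }
  assert (H1 : 0 < 1 - x * x) by nra.
  unfold Rdiv. rewrite Rinv_mult, <- Rmult_assoc.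
  apply Rle_trans with (x * / INR (2 * K + 1) * / (1 - x * x)).
  { apply Rmult_le_compat_r. left; apply Rinv_0_lt_compat; lra.
    apply Rmult_le_compat_r. left; apply Rinv_0_lt_compat; lra. auto. }
  replace (x * (1 + 2 * t) * / (2 * t) * / INR (2 * K + 1)) with
    (x * / INR (2 * K + 1) * ((1 + 2 * t) / (2 * t))) by (field; lra).
  apply Rmult_le_compat_l. apply Rmult_le_pos. lra. left; apply Rinv_0_lt_compat; lra.
  apply (Rmult_le_reg_r (1 - x * x)). lra. rewrite Rinv_l by lra.
  apply (Rmult_le_reg_r (2 * t)). lra.
  replace ((1 + 2 * t) / (2 * t) * (1 - x * x) * (2 * t)) with ((1 + 2 * t) * (1 - x * x)) by (field; lra).
  nra.
Qed.

Lemma A_cont : Cont0 A.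
Proof.
  intros t Ht. destruct (exp_neg_lt1 t Ht). apply (ex_derive_continuous A). unfold A, artanh. auto_derive.
  split. intro; lra. split. 2: auto. apply Rmult_lt_0_compat. lra. apply Rinv_0_lt_compat; lra.
Qed.

Lemma Cont0_mult f g : Cont0 f -> Cont0 g -> Cont0 (fun t => f t * g t).
Proof. intros Hf Hg t Ht. apply (continuous_mult f g); auto. Qed.

Lemma Cont0_plus f g : Cont0 f -> Cont0 g -> Cont0 (fun t => f t + g t).
Proof. intros Hf Hg t Ht. apply (continuous_plus f g); auto. Qed.

Lemma Cont0_minus f g : Cont0 f -> Cont0 g -> Cont0 (fun t => f t - g t).
Proof. intros Hf Hg t Ht. apply (continuous_minus f g); auto. Qed.

Lemma Cont0_const c : Cont0 (fun _ => c).
Proof. intros t _. apply (continuous_const (U:=R_UniformSpace) (V:=R_UniformSpace)). Qed.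

Lemma Cont0_psum (g : nat -> R -> R) K : (forall j, Cont0 (g j)) -> Cont0 (fun t => psum (fun j => g j t) K).
Proof.
  intros H. induction K. intros t _. simpl. apply (continuous_const (U:=R_UniformSpace) (V:=R_UniformSpace)).
  apply (Cont0_plus (fun t => psum (fun j => g j t) K) (g K)); auto.
Qed.

Lemma IL_zero : IL (fun _ => 0) 0.
Proof.
  intros eps He. exists 1. split. lra. exists 0. intros a b _ _.
  rewrite RInt_const. change (scal (b - a) 0) with ((b - a) * 0). rewrite Rmult_0_r, Rminus_0_r, Rabs_R0. lra.
Qed.

Lemma IL_psum (g : nat -> R -> R) (l : nat -> R) K : (forall j, Cont0 (g j)) -> (forall j, IL (g j) (l j)) ->
  IL (fun t => psum (fun j => g j t) K) (psum l K).
Proof.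
  intros Hc Hl. induction K. apply IL_zero.
  apply (IL_plus (fun t => psum (fun j => g j t) K) (g K)); auto. apply Cont0_psum; auto.
Qed.

Lemma psum_scal c f K : psum (fun j => c * f j) K = c * psum f K.
Proof. induction K; simpl; [ring| rewrite IHK; ring]. Qed.

Lemma tser_cont K : Cont0 (fun t => tser t K).
Proof.
  unfold tser. apply (Cont0_psum (fun j t => exp (- (INR (2 * j + 1) * t)) / INR (2 * j + 1))).
  intros j. apply cont_simple. intros t _. auto_derive. auto.
Qed.

Lemma IL_series (phi : R -> R) C (I : nat -> R) Ssum :
  Cont0 phi -> 0 <= C ->
  (forall t, 0 < t -> Rabs (phi t) * (exp (-t) * (1 + 2 * t) / (2 * t)) <= C / (sqrt t * (1 + t))) ->
  (forall j, IL (fun t => phi t * exp (- (INR (2 * j + 1) * t))) (I j)) ->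
  is_series (fun j => I j / INR (2 * j + 1)) Ssum ->
  IL (fun t => phi t * A t) Ssum.
Proof.
  intros Cphi HC Hbd HI HS eps He.
  apply is_series_Reals in HS.
  destruct (HS (eps/3) ltac:(lra)) as [N1 HN1].
  destruct (small_inv (C * PI) (eps/3) ltac:(lra)) as [b0 [Hb0 Hb0']].
  destruct (nat_large b0) as [n1 Hn1].
  set (K := S (max N1 n1)).
  assert (HKI : b0 <= INR (2 * K + 1)).
  { assert (INR n1 <= INR (2 * K + 1)) by (apply le_INR; unfold K; lia). lra. }
  assert (HKpos : 0 < INR (2 * K + 1)) by lra.
  assert (HPS : Rabs (psum (fun j => I j / INR (2 * j + 1)) K - Ssum) < eps / 3).
  { unfold K. rewrite psum_sum_n, sum_n_Reals. apply HN1. lia. }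
  set (g := fun j t => / INR (2 * j + 1) * (phi t * exp (- (INR (2 * j + 1) * t)))).
  assert (Cg : forall j, Cont0 (g j)).
  { intros j. unfold g. apply (Cont0_mult (fun _ => / INR (2 * j + 1))). apply Cont0_const.
    apply Cont0_mult. auto. apply cont_simple. intros; auto_derive; auto. }
  assert (Ig : forall j, IL (g j) (/ INR (2 * j + 1) * I j)).
  { intros j. unfold g. apply IL_scal. apply Cont0_mult. auto. apply cont_simple. intros; auto_derive; auto. auto. }
  assert (Hfin := IL_psum g _ K Cg Ig).
  assert (Efin : forall t, psum (fun j => g j t) K = phi t * tser t K).
  { intros t. unfold g, tser. rewrite <- psum_scal. apply psum_ext. intros j _. field. apply not_0_INR; lia. }
  assert (Epsum : psum (fun j => / INR (2 * j + 1) * I j) K = psum (fun j => I j / INR (2 * j + 1)) K).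
  { apply psum_ext. intros j _. field. apply not_0_INR; lia. }
  rewrite Epsum in Hfin.
  destruct (IL_strong _ _ Hfin (eps/3) ltac:(lra)) as [d [Hd [M [HM HH]]]].
  exists d. split. lra. exists M. intros a b Ha Hb.
  assert (Cr : Cont0 (fun t => phi t * (A t - tser t K))).
  { apply Cont0_mult. auto. apply Cont0_minus. apply A_cont. apply tser_cont. }
  assert (Cf : Cont0 (fun t => psum (fun j => g j t) K)) by (apply Cont0_psum; auto).
  assert (E : RInt (fun t => phi t * A t) a b =
              RInt (fun t => psum (fun j => g j t) K) a b + RInt (fun t => phi t * (A t - tser t K)) a b).
  { rewrite <- (RInt_plus (fun t => psum (fun j => g j t) K) (fun t => phi t * (A t - tser t K))).
    apply RInt_ext. intros x Hx. rewrite Efin. change (plus ?u ?v) with (u + v). reqR. ring.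
    apply ex_RInt_C0; auto; lra. apply ex_RInt_C0; auto; lra. }
  assert (Bd : Rabs (RInt (fun t => phi t * (A t - tser t K)) a b) <= C / INR (2 * K + 1) * PI).
  { apply RInt_bound_sqrt_pi. apply Rdiv_le_0_compat; lra. lra. intros; apply Cr; lra.
    intros t Ht. destruct (A_rem t K ltac:(lra)) as [R1 R2].
    rewrite Rabs_mult, (Rabs_right (A t - tser t K)) by lra.
    assert (Hp := Rabs_pos (phi t)).
    apply Rle_trans with (Rabs (phi t) * (exp (- t) * (1 + 2 * t) / (2 * t) / INR (2 * K + 1))).
    apply Rmult_le_compat_l; auto.
    replace (Rabs (phi t) * (exp (- t) * (1 + 2 * t) / (2 * t) / INR (2 * K + 1))) with
      (Rabs (phi t) * (exp (- t) * (1 + 2 * t) / (2 * t)) / INR (2 * K + 1)) by (field; split; lra).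
    replace (C / INR (2 * K + 1) / (sqrt t * (1 + t))) with (C / (sqrt t * (1 + t)) / INR (2 * K + 1)).
    2: { assert (Hs := sqrt_pos_lt t ltac:(lra)). field. split. lra. split. lra. nra. }
    unfold Rdiv. apply Rmult_le_compat_r. left; apply Rinv_0_lt_compat; lra. apply Hbd. lra. }
  assert (Bd2 : C / INR (2 * K + 1) * PI < eps / 3).
  { replace (C / INR (2 * K + 1) * PI) with (C * PI / INR (2 * K + 1)) by (field; lra). apply Hb0'. lra. }
  rewrite E.
  assert (H1 := HH a b Ha Hb).
  replace (RInt (fun t => psum (fun j => g j t) K) a b + RInt (fun t => phi t * (A t - tser t K)) a b - Ssum)
    with ((RInt (fun t => psum (fun j => g j t) K) a b - psum (fun j => I j / INR (2 * j + 1)) K)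
          + (psum (fun j => I j / INR (2 * j + 1)) K - Ssum) + RInt (fun t => phi t * (A t - tser t K)) a b) by ring.
  eapply Rle_lt_trans. apply Rabs_triang. eapply Rle_lt_trans. apply Rplus_le_compat_r. apply Rabs_triang.
  lra.
Qed.

Lemma ser_plus (a b : nat -> R) la lb : is_series a la -> is_series b lb ->
  is_series (fun n => a n + b n) (la + lb).
Proof. intros; apply (is_series_plus a b la lb); auto. Qed.

Lemma ser_scal (a : nat -> R) c l : is_series a l -> is_series (fun n => c * a n) (c * l).
Proof. intros; apply (is_series_scal c a l); auto. Qed.

Lemma ser_ext (a b : nat -> R) l : (forall n, a n = b n) -> is_series a l -> is_series b l.
Proof. intros; apply (is_series_ext a b l); auto. Qed.

Definition tele (k : nat) := 4 * (/ INR (S k) - / INR (S (S k))).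

Lemma tele_sum n : sum_f_R0 tele n = 4 * (1 - / INR (S (S n))).
Proof.
  induction n. { unfold tele. simpl. field. }
  rewrite tech5, IHn. unfold tele. ring.
Qed.

Lemma tele_pos k : 0 <= tele k.
Proof.
  unfold tele. assert (0 < INR (S k)) by (apply lt_0_INR; lia).
  assert (INR (S k) < INR (S (S k))) by (apply lt_INR; lia).
  assert (/ INR (S (S k)) < / INR (S k)) by (apply Rinv_lt_contravar; nra). lra.
Qed.

Lemma tele_series : is_series tele 4.
Proof.
  apply is_series_Reals. intros eps He.
  destruct (nat_large (4 / eps)) as [N HN]. exists N. intros n Hn.
  unfold Rdist. rewrite tele_sum.
  assert (HI : INR N <= INR (S (S n))) by (apply le_INR; lia).
  assert (0 < 4 / eps) by (apply Rdiv_lt_0_compat; lra).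
  replace (4 * (1 - / INR (S (S n))) - 4) with (- (4 / INR (S (S n)))) by (field; lra).
  rewrite Rabs_Ropp, Rabs_right by (apply Rle_ge, Rdiv_le_0_compat; lra).
  apply (Rmult_lt_reg_r (INR (S (S n)))). lra. unfold Rdiv. rewrite Rmult_assoc, Rinv_l by lra.
  apply (Rmult_lt_reg_r (/ eps)). apply Rinv_0_lt_compat; lra.
  replace (4 * 1 * / eps) with (4 / eps) by (unfold Rdiv; ring).
  replace (eps * INR (S (S n)) * / eps) with (INR (S (S n))) by (field; lra). lra.
Qed.

Lemma tele_partial (a : nat -> R) n d : (forall k, Rabs (a k) <= tele k) ->
  Rabs (sum_f_R0 a (n + d) - sum_f_R0 a n) <= 4 * (/ INR (S (S n)) - / INR (S (S (n + d)))).
Proof.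
  intros H. induction d. rewrite Nat.add_0_r. rewrite Rminus_diag, Rabs_R0. lra.
  replace (n + S d)%nat with (S (n + d)) by lia. rewrite tech5.
  replace (sum_f_R0 a (n + d) + a (S (n + d)) - sum_f_R0 a n) with
    ((sum_f_R0 a (n + d) - sum_f_R0 a n) + a (S (n + d))) by ring.
  eapply Rle_trans. apply Rabs_triang. assert (Ha := H (S (n + d))). unfold tele in Ha. lra.
Qed.

Lemma tele_ex (a : nat -> R) : (forall k, Rabs (a k) <= tele k) -> ex_series a.
Proof. intros H. apply (ex_series_le a tele). intros; apply H. exists 4. apply tele_series. Qed.

Lemma tele_tail (a : nat -> R) l n : (forall k, Rabs (a k) <= tele k) -> is_series a l ->
  Rabs (l - sum_f_R0 a n) <= 4 / INR (S (S n)).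
Proof.
  intros H Hs. apply is_series_Reals in Hs. apply Rle_plus_epsilon. intros eps He.
  destruct (Hs eps He) as [N HN]. set (m := (n + N)%nat).
  assert (H1 := HN m ltac:(unfold m; lia)). unfold Rdist in H1.
  assert (H2 := tele_partial a n N H). fold m in H2.
  assert (0 < INR (S (S m))) by (apply lt_0_INR; lia).
  assert (0 < / INR (S (S m))) by (apply Rinv_0_lt_compat; lra).
  replace (l - sum_f_R0 a n) with (- (sum_f_R0 a m - l) + (sum_f_R0 a m - sum_f_R0 a n)) by ring.
  eapply Rle_trans. apply Rabs_triang. rewrite Rabs_Ropp. unfold Rdiv. lra.
Qed.

Definition zt (s : R) (k : nat) := / Rpower (INR (S k)) s.
Definition dzt (s : R) (k : nat) := - (ln (INR (S k)) * / Rpower (INR (S k)) s).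

Lemma tele_ge k : 2 / (INR (S k) * INR (S k)) <= tele k.
Proof.
  unfold tele. assert (H1 : 1 <= INR (S k)) by (apply INR_ge1; lia).
  rewrite (S_INR (S k)). set (x := INR (S k)) in *.
  replace (4 * (/ x - / (x + 1))) with (4 / (x * (x + 1))) by (field; lra).
  unfold Rdiv. apply Rle_trans with (2 * / (x * x)). lra.
  apply Rle_trans with (2 * 2 * / (x * (x + 1))).
  - rewrite Rmult_assoc. apply Rmult_le_compat_l. lra.
    apply (Rmult_le_reg_r (x * x * (x + 1))). nra.
    replace (/ (x * x) * (x * x * (x + 1))) with (x + 1) by (field; lra).
    replace (2 * / (x * (x + 1)) * (x * x * (x + 1))) with (2 * x) by (field; lra). lra.
  - lra.
Qed.

Lemma Rpower_lb x s : 1 <= x -> 5/2 <= s -> x * x * sqrt x <= Rpower x s.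
Proof.
  intros Hx Hs. assert (Hl : 0 <= ln x) by (rewrite <- ln_1; apply ln_le; lra).
  replace (x * x * sqrt x) with (Rpower x (5/2)).
  - unfold Rpower. apply exp_le_mono. nra.
  - replace (5/2) with (INR 2 + / 2) by (simpl; field). rewrite Rpower_plus, Rpower_pow, Rpower_sqrt by lra.
    simpl. ring.
Qed.

Lemma zt_bounds s k : 5/2 <= s -> Rabs (zt s k) <= tele k /\ Rabs (dzt s k) <= tele k.
Proof.
  intros Hs. assert (H1 : 1 <= INR (S k)) by (apply INR_ge1; lia).
  assert (HT := tele_ge k). unfold zt, dzt. set (x := INR (S k)) in *.
  assert (HP := Rpower_lb x s H1 Hs).
  assert (Hsq : 1 <= sqrt x) by (rewrite <- sqrt_1; apply sqrt_le_1_alt; lra).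
  assert (Hl : 0 <= ln x) by (rewrite <- ln_1; apply ln_le; lra).
  assert (Hln : ln x <= 2 * sqrt x).
  { assert (Hss : sqrt x * sqrt x = x) by (apply sqrt_sqrt; lra).
    assert (ln x = 2 * ln (sqrt x)) by (rewrite <- Hss at 1; rewrite ln_mult by lra; ring).
    assert (ln (sqrt x) < sqrt x) by (apply ln_lt_self; lra). lra. }
  assert (Hpos : 0 < x * x * sqrt x) by (apply Rmult_lt_0_compat; nra).
  assert (HR : 0 < Rpower x s) by lra.
  assert (Hinv : / Rpower x s <= / (x * x * sqrt x)) by (apply Rinv_le_contravar; lra).
  assert (Hip : 0 < / Rpower x s) by (apply Rinv_0_lt_compat; lra).
  split.
  - rewrite Rabs_right by lra. eapply Rle_trans. apply Hinv.
    eapply Rle_trans. 2: apply HT. unfold Rdiv.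
    apply Rle_trans with (/ (x * x)). apply Rinv_le_contravar. nra. nra.
    assert (0 < / (x * x)) by (apply Rinv_0_lt_compat; nra). lra.
  - rewrite Rabs_Ropp, Rabs_right by (apply Rle_ge, Rmult_le_pos; lra).
    eapply Rle_trans. 2: apply HT.
    apply Rle_trans with (2 * sqrt x * / (x * x * sqrt x)).
    apply Rmult_le_compat; lra.
    right. field. split; lra.
Qed.

Lemma zeta_series s : 5/2 <= s -> is_series (zt s) (zeta s).
Proof.
  intros Hs. unfold zeta. apply Series_correct. apply tele_ex. intros k. apply zt_bounds. auto.
Qed.

Lemma zt_deriv s j : is_derive (fun s => zt s j) s (dzt s j).
Proof.
  unfold zt, dzt, Rpower. auto_derive. apply Rgt_not_eq, exp_pos.
  assert (H := exp_pos (s * ln (INR (S j)))). change (match j with 0%nat => 1 | S _ => INR j + 1 end) with (INR (S j)). reqR. field. lra.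
Qed.

Lemma zeta'_series : is_series (dzt 3) (zeta' 3).
Proof.
  set (g' := fun s => Series (dzt s)).
  assert (Hd : forall s, 5/2 <= s -> is_series (dzt s) (g' s)).
  { intros s Hs. apply Series_correct. apply tele_ex. intros k. apply zt_bounds. auto. }
  assert (HB : forall y, Boule 3 (mkposreal (1/2) ltac:(lra)) y -> 5/2 <= y).
  { intros y Hy. unfold Boule in Hy. simpl in Hy. apply Rabs_lt_between in Hy. lra. }
  assert (D : derivable_pt_lim zeta 3 (g' 3)).
  { apply (CVU_derivable (fun n s => sum_f_R0 (zt s) n) (fun n s => sum_f_R0 (dzt s) n) zeta g' 3
             (mkposreal (1/2) ltac:(lra))).
    - intros eps He. destruct (nat_large (4 / eps)) as [N HN]. exists N. intros n y Hn Hy.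
      eapply Rle_lt_trans. apply tele_tail. intros k. apply zt_bounds. apply HB; auto. apply Hd. apply HB; auto.
      assert (HI : INR N <= INR (S (S n))) by (apply le_INR; lia).
      assert (0 < 4 / eps) by (apply Rdiv_lt_0_compat; lra).
      apply (Rmult_lt_reg_r (INR (S (S n)))). lra. unfold Rdiv. rewrite Rmult_assoc, Rinv_l by lra.
      apply (Rmult_lt_reg_r (/ eps)). apply Rinv_0_lt_compat; lra.
      replace (4 * 1 * / eps) with (4 / eps) by (unfold Rdiv; ring).
      replace (eps * INR (S (S n)) * / eps) with (INR (S (S n))) by (field; lra). lra.
    - intros x Hx. assert (H := zeta_series x (HB x Hx)). apply is_series_Reals in H. exact H.
    - intros n x _. apply is_derive_Reals.
      apply (is_derive_sum (fun j s => zt s j) (fun j s => dzt s j)). intros j. apply zt_deriv.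
    - unfold Boule. rewrite Rminus_diag, Rabs_R0. simpl. lra. }
  apply is_derive_Reals in D. unfold zeta'. rewrite (is_derive_unique _ _ _ D). apply Hd. lra.
Qed.

Lemma pair_sum (a : nat -> R) n : sum_f_R0 (fun j => a (2 * j)%nat + a (2 * j + 1)%nat) n = sum_f_R0 a (2 * n + 1).
Proof.
  induction n. simpl. ring.
  rewrite tech5, IHn. replace (2 * S n + 1)%nat with (S (S (2 * n + 1))) by lia.
  rewrite !tech5. replace (S (2 * n + 1)) with (2 * S n)%nat by lia.
  replace (S (2 * S n)) with (2 * S n + 1)%nat by lia. ring.
Qed.

Lemma pair_series (a : nat -> R) l : is_series a l -> is_series (fun j => a (2 * j)%nat + a (2 * j + 1)%nat) l.
Proof.
  intros H. apply is_series_Reals in H. apply is_series_Reals. intros eps He.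
  destruct (H eps He) as [N HN]. exists N. intros n Hn. rewrite pair_sum. apply HN. lia.
Qed.

Lemma odd_split (a : nat -> R) l lo : is_series a l -> is_series (fun j => a (2 * j + 1)%nat) lo ->
  is_series (fun j => a (2 * j)%nat) (l - lo).
Proof.
  intros H1 H2. assert (H := ser_plus _ _ _ _ (pair_series a l H1) (ser_scal _ (-1) _ H2)).
  eapply ser_ext. 2: { replace (l - lo) with (l + -1 * lo) by ring. apply H. }
  intros n; simpl; ring.
Qed.

Lemma zt3 k : zt 3 k = / INR (S k) ^ 3.
Proof.
  unfold zt. replace 3 with (INR 3) at 1 by (simpl; ring). rewrite Rpower_pow. auto.
  apply lt_0_INR; lia.
Qed.

Lemma INR_2j2 j : INR (S (2 * j + 1)) = 2 * INR (S j).
Proof. rewrite !S_INR, plus_INR, mult_INR. simpl. ring. Qed.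

Lemma odd_zeta : is_series (fun j => / INR (2 * j + 1) ^ 3) (7 / 8 * zeta 3).
Proof.
  assert (H1 := zeta_series 3 ltac:(lra)).
  assert (H2 : is_series (fun j => zt 3 (2 * j + 1)%nat) (/8 * zeta 3)).
  { eapply ser_ext. 2: apply (ser_scal _ (/8) _ H1). intros j. rewrite !zt3, INR_2j2.
    field. apply not_0_INR. lia. }
  assert (H := odd_split _ _ _ H1 H2).
  replace (7 / 8 * zeta 3) with (zeta 3 - / 8 * zeta 3) by field.
  eapply ser_ext. 2: exact H.
  intros j. cbv beta. rewrite zt3. replace (S (2 * j)) with (2 * j + 1)%nat by lia. reflexivity.
Qed.

Lemma dzt3 k : dzt 3 k = - (ln (INR (S k)) / INR (S k) ^ 3).
Proof. change (dzt 3 k) with (- (ln (INR (S k)) * zt 3 k)). rewrite zt3. reflexivity. Qed.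

Lemma odd_zeta' : is_series (fun j => ln (INR (2 * j + 1)) / INR (2 * j + 1) ^ 3)
                            (- (7 / 8 * zeta' 3 + ln 2 / 8 * zeta 3)).
Proof.
  assert (H1 := zeta'_series).
  assert (H0 := zeta_series 3 ltac:(lra)).
  assert (H2 : is_series (fun j => dzt 3 (2 * j + 1)%nat) (/8 * zeta' 3 + (- (ln 2 / 8)) * zeta 3)).
  { eapply ser_ext. 2: exact (ser_plus _ _ _ _ (ser_scal _ (/8) _ H1) (ser_scal _ (- (ln 2 / 8)) _ H0)).
    intros j. cbv beta. rewrite !dzt3, zt3, INR_2j2. assert (0 < INR (S j)) by (apply lt_0_INR; lia).
    rewrite ln_mult by lra. field. lra. }
  assert (H := ser_scal _ (-1) _ (odd_split _ _ _ H1 H2)).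
  replace (- (7 / 8 * zeta' 3 + ln 2 / 8 * zeta 3)) with
       (-1 * (zeta' 3 - (/ 8 * zeta' 3 + - (ln 2 / 8) * zeta 3))) by field.
  eapply ser_ext. 2: exact H.
  intros j. cbv beta. rewrite dzt3. replace (S (2 * j)) with (2 * j + 1)%nat by lia. ring.
Qed.

Definition ReVal := - (1 - euler_gamma) * (7 / 8 * zeta 3) + - (7 / 8 * zeta' 3 + ln 2 / 8 * zeta 3).
Definition ImVal := - PI * (7 / 8 * zeta 3).

Lemma INR_odd_pos j : 0 < INR (2 * j + 1).
Proof. apply lt_0_INR. lia. Qed.

Lemma IL_re : IL (fun t => - (t * ln t) * A t) ReVal.
Proof.
  apply (IL_series (fun t => - (t * ln t)) 54 (fun j => - ((1 - euler_gamma - ln (INR (2 * j + 1))) / (INR (2 * j + 1) * INR (2 * j + 1))))).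
  - apply cont_simple. intros; auto_derive; lra.
  - lra.
  - intros t Ht. rewrite Rabs_Ropp, Rabs_mult, Rabs_right by lra.
    assert (L := abs_ln_bound t Ht). assert (E := exp_decay3 t ltac:(lra)).
    assert (Hs := sqrt_pos_lt t Ht). assert (Ep := exp_pos (-t)).
    assert (Hl := Rabs_pos (ln t)).
    replace (t * Rabs (ln t) * (exp (- t) * (1 + 2 * t) / (2 * t))) with (Rabs (ln t) * exp (-t) * (1 + 2 * t) / 2) by (field; lra).
    apply Rle_trans with ((2 * (1 + t) / sqrt t) * (27 / (1 + t) ^ 3) * (1 + 2 * t) / 2).
    { unfold Rdiv. apply Rmult_le_compat_r. lra. apply Rmult_le_compat_r. lra. apply Rmult_le_compat; lra. }
    replace (54 / (sqrt t * (1 + t))) with ((2 * (1 + t) / sqrt t) * (27 / (1 + t) ^ 3) * (2 * (1 + t)) / 2) by (simpl; field; lra).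
    unfold Rdiv. apply Rmult_le_compat_r. lra. apply Rmult_le_compat_l. 2: lra.
    apply Rmult_le_pos. apply Rmult_le_pos. lra. left; apply Rinv_0_lt_compat; lra.
    apply Rmult_le_pos. lra. left; apply Rinv_0_lt_compat; apply pow_lt; lra.
  - intros j. assert (Hk := INR_odd_pos j).
    assert (H := IL_scal _ (-1) _ (cont_simple (fun t => t * ln t * exp (- (INR (2 * j + 1) * t))) ltac:(intros; auto_derive; lra)) (IL_term_ln _ Hk)).
    eapply IL_unique_ext. eapply IL_ext. 2: apply H. intros; cbv beta; ring. ring.
  - assert (H := ser_plus _ _ _ _ (ser_scal _ (- (1 - euler_gamma)) _ odd_zeta) odd_zeta').
    eapply ser_ext. 2: exact H. intros j. cbv beta. assert (Hk := INR_odd_pos j). field. lra.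
Qed.

Lemma IL_im : IL (fun t => - PI * t * A t) ImVal.
Proof.
  assert (HPI := PI_RGT_0).
  apply (IL_series (fun t => - PI * t) (27 * PI) (fun j => - PI / (INR (2 * j + 1) * INR (2 * j + 1)))).
  - apply cont_simple. intros; auto_derive; lra.
  - nra.
  - intros t Ht. rewrite Rabs_mult, Rabs_Ropp, !Rabs_right by lra.
    assert (E := exp_decay3 t ltac:(lra)).
    assert (Hs := sqrt_pos_lt t Ht). assert (Ep := exp_pos (-t)).
    assert (Hst : sqrt t <= 1 + t).
    { destruct (Rle_dec t 1). assert (sqrt t <= 1) by (rewrite <- sqrt_1; apply sqrt_le_1_alt; lra). lra.
      assert (Hss := sqrt_sqrt t ltac:(lra)). nra. }
    replace (PI * t * (exp (- t) * (1 + 2 * t) / (2 * t))) with (PI * exp (-t) * (1 + 2 * t) / 2) by (field; lra).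
    apply Rle_trans with (PI * (27 / (1 + t) ^ 3) * (2 * (1 + t)) / 2).
    { unfold Rdiv. apply Rmult_le_compat_r. lra. apply Rmult_le_compat; nra. }
    replace (PI * (27 / (1 + t) ^ 3) * (2 * (1 + t)) / 2) with (27 * PI / ((1 + t) * (1 + t))) by (simpl; field; lra).
    unfold Rdiv. apply Rmult_le_compat_l. nra. apply Rinv_le_contravar. nra. nra.
  - intros j. assert (Hk := INR_odd_pos j).
    assert (H := IL_scal _ (- PI) _ (cont_simple (fun t => t * exp (- (INR (2 * j + 1) * t))) ltac:(intros; auto_derive; lra)) (IL_term _ Hk)).
    eapply IL_unique_ext. eapply IL_ext. 2: apply H. intros; cbv beta; ring. field. lra.
  - assert (H := ser_scal _ (- PI) _ odd_zeta).
    eapply ser_ext. 2: exact H. intros j. cbv beta. assert (Hk := INR_odd_pos j). field. lra.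
Qed.

Lemma subst_gen (w : R -> R) a b : 0 < a < b -> b < 1 ->
  (forall x, 0 < x < 1 -> continuous (fun x => ln x * artanh x / x * w (- ln x)) x) ->
  Cont0 (fun t => - (t * w t) * A t) ->
  is_RInt (fun x => ln x * artanh x / x * w (- ln x)) a b (RInt (fun t => - (t * w t) * A t) (- ln b) (- ln a)).
Proof.
  intros Hab Hb1 Hh Hg.
  set (h := fun x => ln x * artanh x / x * w (- ln x)) in *.
  set (g := fun t => - (t * w t) * A t) in *.
  set (u := - ln b). set (v := - ln a).
  assert (Hu : 0 < u). { unfold u. assert (ln b < 0) by (rewrite <- ln_1; apply ln_increasing; lra). lra. }
  assert (Huv : u < v). { unfold u, v. assert (ln a < ln b) by (apply ln_increasing; lra). lra. }
  assert (Eu : exp (- u) = b) by (unfold u; rewrite Ropp_involutive; apply exp_ln; lra).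
  assert (Ev : exp (- v) = a) by (unfold v; rewrite Ropp_involutive; apply exp_ln; lra).
  assert (HC := is_RInt_comp h (fun t => exp (- t)) (fun t => - exp (- t)) u v).
  cbv beta in HC. rewrite Eu, Ev in HC.
  assert (HC' : is_RInt (fun y => - g y) u v (RInt h b a)).
  { eapply is_RInt_ext. 2: apply HC.
    - intros x Hx. rewrite Rmin_left, Rmax_right in Hx by lra.
      change (- exp (- x) * h (exp (- x)) = - g x). unfold h, g, A. rewrite ln_exp, Ropp_involutive.
      assert (Hp := exp_pos (-x)). field. lra.
    - intros x Hx. rewrite Rmin_left, Rmax_right in Hx by lra. apply Hh. apply exp_neg_lt1. lra.
    - intros x Hx. rewrite Rmin_left, Rmax_right in Hx by lra. split. auto_derive. auto. ring.
      apply (ex_derive_continuous (fun t => - exp (-t))). auto_derive. auto. }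
  assert (Exg : ex_RInt g u v) by (apply ex_RInt_C0; auto; lra).
  assert (Exh : ex_RInt h a b).
  { apply ex_RInt_cont. rewrite Rmin_left, Rmax_right by lra. intros; apply Hh; lra. }
  assert (E1 : RInt (fun y => - g y) u v = RInt h b a) by (apply is_RInt_unique; auto).
  assert (E2 := RInt_opp g u v Exg). change (RInt (fun y => - g y) u v = - RInt g u v) in E2.
  assert (E3 := opp_RInt_swap h a b Exh). change (- RInt h a b = RInt h b a) in E3.
  replace (RInt g u v) with (RInt h a b) by lra.
  apply (RInt_correct (V:=R_CompleteNormedModule)). auto.
Qed.

Lemma integrand_comp x : 0 < x < 1 ->
  fst (integrand x) = ln x * artanh x / x * ln (- ln x) /\
  snd (integrand x) = ln x * artanh x / x * (fun _ => PI) (- ln x).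
Proof.
  intros Hx. assert (ln x < 0) by (rewrite <- ln_1; apply ln_increasing; lra).
  unfold integrand, clog_real. destruct (Rlt_dec 0 (ln x)). lra.
  unfold Cmult, RtoC. simpl. split; ring.
Qed.

Lemma L_val : Cmult (RtoC (/ 8))
       (Cplus (RtoC (-7 * zeta' 3))
          (Cmult (RtoC (zeta 3))
             ((-7 + 7 * euler_gamma - ln 2, - 7 * PI) : C))) = (ReVal, ImVal).
Proof.
  unfold Cmult, Cplus, RtoC, ReVal, ImVal. cbn [fst snd]. f_equal; field.
Qed.

Lemma cont_hR x : 0 < x < 1 -> continuous (fun x => ln x * artanh x / x * ln (- ln x)) x.
Proof.
  intros Hx. assert (ln x < 0) by (rewrite <- ln_1; apply ln_increasing; lra).
  apply (ex_derive_continuous (fun x => ln x * artanh x / x * ln (- ln x))). unfold artanh. auto_derive.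
  repeat split; try lra. apply Rmult_lt_0_compat. lra. apply Rinv_0_lt_compat; lra.
Qed.

Lemma cont_hI x : 0 < x < 1 -> continuous (fun x => ln x * artanh x / x * (fun _ => PI) (- ln x)) x.
Proof.
  intros Hx.
  apply (ex_derive_continuous (fun x => ln x * artanh x / x * (fun _ => PI) (- ln x))). unfold artanh. auto_derive.
  repeat split; try lra. apply Rmult_lt_0_compat. lra. apply Rinv_0_lt_compat; lra.
Qed.

Theorem mainTheorem13 :
  is_RInt_gen integrand (at_right 0) (at_left 1)
    (Cmult (RtoC (/ 8))
       (Cplus (RtoC (-7 * zeta' 3))
          (Cmult (RtoC (zeta 3))
             ((-7 + 7 * euler_gamma - ln 2, - 7 * PI) : C)))).
Proof.
  rewrite L_val.
  assert (CgR : Cont0 (fun t => - (t * ln t) * A t)).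
  { apply Cont0_mult. apply cont_simple. intros; auto_derive; lra. apply A_cont. }
  assert (CgI : Cont0 (fun t => - (t * (fun _ => PI) t) * A t)).
  { apply Cont0_mult. apply cont_simple. intros; auto_derive; lra. apply A_cont. }
  assert (HIm : IL (fun t => - (t * (fun _ => PI) t) * A t) ImVal).
  { eapply IL_ext. 2: apply IL_im. intros; cbv beta; ring. }
  intros P [e He].
  destruct (IL_strong _ _ IL_re e (cond_pos e)) as [d1 [Hd1 [M1 [HM1 H1]]]].
  destruct (IL_strong _ _ HIm e (cond_pos e)) as [d2 [Hd2 [M2 [HM2 H2]]]].
  set (d := Rmin d1 d2). set (M := Rmax M1 M2).
  assert (Hd : 0 < d <= 1). { split. apply Rmin_glb_lt; lra. unfold d. assert (Hm := Rmin_l d1 d2). lra. }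
  assert (HM : 1 <= M) by (unfold M; assert (Hm := Rmax_l M1 M2); lra).
  assert (HdM : exp (- M) <= exp (- d)) by (apply exp_le_mono; lra).
  assert (Hed : exp (- d) < 1) by (apply exp_neg_lt1; lra).
  apply (Filter_prod _ _ _ (fun a => 0 < a < exp (- M)) (fun b => exp (- d) < b < 1)).
  - exists (mkposreal (exp (- M)) (exp_pos _)). intros y Hy Hpos. split. auto.
    change (Rabs (y - 0) < exp (- M)) in Hy. rewrite Rminus_0_r in Hy. apply Rabs_lt_between in Hy. lra.
  - assert (Hp : 0 < 1 - exp (- d)) by lra.
    exists (mkposreal _ Hp). intros y Hy Hlt. split. 2: auto.
    change (Rabs (y - 1) < 1 - exp (- d)) in Hy. apply Rabs_lt_between in Hy. lra.
  - intros a b Ha Hb. simpl fst. simpl snd.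
    assert (Hab : 0 < a < b) by lra.
    set (u := - ln b). set (v := - ln a).
    assert (Hu : 0 < u < d).
    { unfold u. split. assert (ln b < 0) by (rewrite <- ln_1; apply ln_increasing; lra). lra.
      assert (- d < ln b). { rewrite <- (ln_exp (- d)). apply ln_increasing. apply exp_pos. lra. } lra. }
    assert (Hv : M < v).
    { unfold v. assert (ln a < - M). { rewrite <- (ln_exp (- M)). apply ln_increasing; lra. } lra. }
    exists (RInt (fun t => - (t * ln t) * A t) u v, RInt (fun t => - (t * (fun _ => PI) t) * A t) u v).
    split.
    + apply (is_RInt_fct_extend_pair (U:=R_NormedModule) (V:=R_NormedModule)).
      * eapply is_RInt_ext. 2: apply (subst_gen ln a b Hab ltac:(lra) cont_hR CgR).
        intros x Hx. rewrite Rmin_left, Rmax_right in Hx by lra. symmetry. apply integrand_comp. lra.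
      * eapply is_RInt_ext. 2: apply (subst_gen (fun _ => PI) a b Hab ltac:(lra) cont_hI CgI).
        intros x Hx. rewrite Rmin_left, Rmax_right in Hx by lra. symmetry. apply integrand_comp. lra.
    + apply He. split.
      * change (Rabs (RInt (fun t => - (t * ln t) * A t) u v - ReVal) < e).
        apply H1. split. lra. assert (Hm := Rmin_l d1 d2). fold d in Hm. lra.
        assert (Hm := Rmax_l M1 M2). fold M in Hm. lra.
      * change (Rabs (RInt (fun t => - (t * (fun _ => PI) t) * A t) u v - ImVal) < e).
        apply H2. split. lra. assert (Hm := Rmin_r d1 d2). fold d in Hm. lra.
        assert (Hm := Rmax_r M1 M2). fold M in Hm. lra.
Qed.
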